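(* Fix $0\le k<1$. For every $\eta>0$ there exists $\varepsilon_0>0$ such that the following holds: if $0\le\varepsilon<\varepsilon_0$ and $h:\mathbb{D}\to\mathbb{D}$ is holomorphic with $h(0)=\varepsilon$ and \[ h(r\mathbb{D})\subset \overline{B}\Big(\tfrac{1-r^2}{2},\tfrac{1+r^2}{2}\Big)\quad\text{for all } r\in(0,1), \] then $|h(k)|\le k^2+\eta$. In other words, $|h(k)|\le k^2+o(1)$ as $\varepsilon\to0$, uniformly over all such $h$.
   Context: $\mathbb{D}$ is the open unit disk, $r\mathbb{D}=\{|z|<r\}$, and $\overline{B}(c,\rho)$ is the closed disk with center $c$ and radius $\rho$ (so $\overline{B}((1-r^2)/2,(1+r^2)/2)$ is the closed disk with diameter $[-r^2,1]$). *)

(* Defs.v *)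
From Stdlib Require Import Reals.
From Coquelicot Require Import Coquelicot.
Open Scope R_scope.

Definition holomorphic_on_disk (h : C -> C) : Prop :=
  forall z : C, Cmod z < 1 -> @ex_derive C_AbsRing C_NormedModule h z.

Definition maps_disk_to_disk (h : C -> C) : Prop :=
  forall z : C, Cmod z < 1 -> Cmod (h z) < 1.

Definition closed_ball (c : C) (rho : R) (w : C) : Prop :=
  Cmod (w - c) <= rho.

(* Main.v *)
Require Import Defs.
From Stdlib Require Import Reals Lra Lia.
From Coquelicot Require Import Coquelicot.
Open Scope R_scope.

Lemma is_derive_eps {K : AbsRing} {V : NormedModule K} (f : K -> V) x l :
  is_derive f x l <->
  (forall eps, 0 < eps -> exists delta, 0 < delta /\ forall y,
     norm (minus y x) < delta ->
     norm (minus (minus (f y) (f x)) (scal (minus y x) l)) <= eps * norm (minus y x)).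
Proof.
split.
- intros [_ H] eps Heps.
  specialize (H x (fun P H => H)).
  specialize (H (mkposreal eps Heps)).
  apply (locally_le_locally_norm (K:=K) (V:=AbsRing_NormedModule K) x) in H.
  destruct H as [d Hd]. exists d. split. apply cond_pos.
  intros y Hy. apply (Hd y). exact Hy.
- intros H. split. apply is_linear_scal_l.
  intros x0 Hx0.
  assert (Hx : x0 = x).
  { symmetry. apply (is_filter_lim_locally_unique x x0). exact Hx0. }
  subst x0.
  intros eps. destruct (H eps (cond_pos eps)) as [d [Hd Hd']].
  apply (locally_norm_le_locally (K:=K) (V:=AbsRing_NormedModule K) x). exists (mkposreal d Hd). intros y Hy.
  apply Hd'. exact Hy.
Qed.

Lemma norm_CR (x : C) : @norm R_AbsRing C_R_NormedModule x = Cmod x.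
Proof.
destruct x as [a b]. unfold norm. simpl. unfold prod_norm, Cmod. simpl.
unfold norm; simpl. unfold abs; simpl.
rewrite !Rmult_1_r, <- (Rabs_mult a a), <- (Rabs_mult b b), !(Rabs_pos_eq (_ * _)) by nra; reflexivity.
Qed.

Definition CD (f : C -> C) (z l : C) := @is_derive C_AbsRing C_NormedModule f z l.
Definition RD (g : R -> C) (t : R) (v : C) := @is_derive R_AbsRing C_R_NormedModule g t v.

Lemma CD_eps f z l : CD f z l <->
  (forall eps, 0 < eps -> exists delta, 0 < delta /\ forall w,
     Cmod (w - z) < delta -> Cmod (f w - f z - l * (w - z)) <= eps * Cmod (w - z)).
Proof.
unfold CD. rewrite is_derive_eps.
split; intros H eps Heps; destruct (H eps Heps) as [d [Hd H']]; exists d; split; auto;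
intros w Hw; specialize (H' w Hw).
- change (Cmod (f w - f z - (w - z) * l) <= eps * Cmod (w - z))%C in H'.
  rewrite Cmult_comm. exact H'.
- change (Cmod (f w - f z - (w - z) * l) <= eps * Cmod (w - z))%C.
  rewrite Cmult_comm. exact H'.
Qed.

Lemma scal_CR (r : R) (y : C) : @scal R_AbsRing C_R_NormedModule r y = (RtoC r * y)%C.
Proof.
destruct y as [a b]. unfold scal; simpl. unfold prod_scal, Cmult, RtoC; simpl.
unfold scal; simpl. unfold mult; simpl. f_equal; ring.
Qed.

Lemma RD_eps g t v : RD g t v <->
  (forall eps, 0 < eps -> exists delta, 0 < delta /\ forall s,
     Rabs (s - t) < delta -> Cmod (g s - g t - RtoC (s - t)%R * v) <= eps * Rabs (s - t)).
Proof.
unfold RD. rewrite is_derive_eps.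
split; intros H eps Heps; destruct (H eps Heps) as [d [Hd H']]; exists d; split; auto;
intros w Hw.
- specialize (H' w Hw). rewrite norm_CR, scal_CR in H'.
  change (Cmod (g w - g t - RtoC (w - t)%R * v) <= eps * Rabs (w - t))%C in H'. exact H'.
- rewrite norm_CR, scal_CR.
  change (Cmod (g w - g t - RtoC (w - t)%R * v) <= eps * Rabs (w - t))%C. apply H'. exact Hw.
Qed.

Definition ee (t : R) : C := (cos t, sin t).
Definition gam (r t : R) : C := (r * cos t, r * sin t).

Lemma gam_eq r t : gam r t = (RtoC r * ee t)%C.
Proof. unfold gam, ee, RtoC, Cmult; simpl. f_equal; ring. Qed.

Lemma Cmod_le_sum (x : C) : Cmod x <= Rabs (fst x) + Rabs (snd x).
Proof.
destruct x as [a b]; unfold Cmod; simpl.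
rewrite <- (sqrt_square (Rabs a + Rabs b)) by (pose proof (Rabs_pos a); pose proof (Rabs_pos b); lra).
apply sqrt_le_1_alt.
pose proof (Rabs_pos a); pose proof (Rabs_pos b).
assert (a*a = Rabs a * Rabs a) by (rewrite <- Rabs_mult; rewrite Rabs_pos_eq; nra).
assert (b*b = Rabs b * Rabs b) by (rewrite <- Rabs_mult; rewrite Rabs_pos_eq; nra).
pose proof (Rmult_le_pos _ _ H H0). simpl. nra.
Qed.

Lemma Cmod_ee t : Cmod (ee t) = 1.
Proof.
unfold Cmod, ee; simpl. transitivity (sqrt 1). 2: apply sqrt_1. f_equal.
pose proof (sin2_cos2 t). unfold Rsqr in H. nra.
Qed.

Lemma Cmod_gam r t : 0 <= r -> Cmod (gam r t) = r.
Proof.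
intros Hr. rewrite gam_eq, Cmod_mult, Cmod_ee, Cmod_R, Rabs_pos_eq by lra. ring.
Qed.

Lemma Rabs_sin_le_pos x : 0 <= x -> Rabs (sin x) <= x.
Proof.
intros Hx. pose proof (SIN_bound x). pose proof PI2_3_2 as HPI.
destruct (Rle_dec 1 x). apply Rabs_le; lra.
destruct (Req_dec x 0). subst. rewrite sin_0, Rabs_R0. lra.
pose proof (sin_lt_x x). pose proof (sin_ge_0 x).
rewrite Rabs_pos_eq; lra.
Qed.

Lemma Rabs_sin_le x : Rabs (sin x) <= Rabs x.
Proof.
destruct (Rle_dec 0 x).
- rewrite (Rabs_pos_eq x) by lra. apply Rabs_sin_le_pos; lra.
- rewrite (Rabs_left x) by lra. rewrite <- Rabs_Ropp, <- sin_neg. apply Rabs_sin_le_pos; lra.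
Qed.

Lemma ee_diff t s : Cmod (ee t - ee s) <= Rabs (t - s).
Proof.
unfold Cmod, ee; simpl.
rewrite <- (sqrt_square (Rabs (t - s))) by apply Rabs_pos.
apply sqrt_le_1_alt.
assert (E0 : forall s u, (cos (s + 2 * u) - cos s) ^ 2 + (sin (s + 2 * u) + - sin s) ^ 2 = 4 * (sin u) ^ 2).
{ intros s0 u. rewrite cos_plus, sin_plus, cos_2a, sin_2a.
  pose proof (sin2_cos2 s0). pose proof (sin2_cos2 u). unfold Rsqr in *. nra. }
assert (E : (cos t - cos s) ^ 2 + (sin t + - sin s) ^ 2 = 4 * (sin ((t - s)/2)) ^ 2).
{ rewrite <- (E0 s ((t - s)/2)). replace (s + 2 * ((t - s) / 2)) with t by field. reflexivity. }
simpl in E.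
change (cos t + - cos s) with (cos t - cos s). rewrite E.
pose proof (Rabs_sin_le ((t - s)/2)).
assert (H0 : Rabs ((t - s) / 2) = Rabs (t - s) / 2).
{ unfold Rdiv. rewrite Rabs_mult, (Rabs_pos_eq (/2)) by lra. ring. }
rewrite H0 in H.
set (q := sin ((t - s) / 2)) in *.
assert (q * q = Rabs q * Rabs q) by (rewrite <- Rabs_mult; rewrite Rabs_pos_eq; nra).
pose proof (Rabs_pos q).
assert (Rabs q * Rabs q <= (Rabs (t - s) / 2) * (Rabs (t - s) / 2)) by (apply Rmult_le_compat; lra).
nra.
Qed.

Lemma gam_diff r t r' t' : Cmod (gam r t - gam r' t') <= Rabs (r - r') + Rabs r' * Rabs (t - t').
Proof.
replace (gam r t - gam r' t')%C with (RtoC (r - r') * ee t + RtoC r' * (ee t - ee t'))%C.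
2:{ rewrite !gam_eq. unfold RtoC, Cmult, Cminus, Cplus, Copp; simpl. f_equal; ring. }
eapply Rle_trans. apply Cmod_triangle.
rewrite !Cmod_mult, !Cmod_R, Cmod_ee.
pose proof (ee_diff t t'). pose proof (Rabs_pos r').
nra.
Qed.

Lemma RD_pair (f g : R -> R) t a b :
  is_derive f t a -> is_derive g t b -> RD (fun s => (f s, g s)) t (a, b).
Proof.
intros Hf Hg. apply RD_eps. intros eps Heps.
pose proof (proj1 (is_derive_eps (K:=R_AbsRing) (V:=R_NormedModule) f t a) Hf) as Hf'.
pose proof (proj1 (is_derive_eps (K:=R_AbsRing) (V:=R_NormedModule) g t b) Hg) as Hg'.
clear Hf Hg. rename Hf' into Hf. rename Hg' into Hg.
destruct (Hf (eps/2)) as [d1 [Hd1 H1]]. lra.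
destruct (Hg (eps/2)) as [d2 [Hd2 H2]]. lra.
exists (Rmin d1 d2). split. apply Rmin_pos; auto.
intros s Hs. eapply Rle_trans. apply Cmod_le_sum.
simpl. specialize (H1 s). specialize (H2 s).
change (norm (minus s t)) with (Rabs (s - t)) in H1, H2.
assert (Hs1 : Rabs (s - t) < d1) by (eapply Rlt_le_trans; [exact Hs| apply Rmin_l]).
assert (Hs2 : Rabs (s - t) < d2) by (eapply Rlt_le_trans; [exact Hs| apply Rmin_r]).
specialize (H1 Hs1). specialize (H2 Hs2).
change (Rabs (f s - f t - (s - t) * a) <= eps / 2 * Rabs (s - t)) in H1.
change (Rabs (g s - g t - (s - t) * b) <= eps / 2 * Rabs (s - t)) in H2.
replace (f s + - f t + - ((s - t) * a - 0 * b)) with (f s - f t - (s - t) * a) by ring.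
replace (g s + - g t + - ((s - t) * b + 0 * a)) with (g s - g t - (s - t) * b) by ring.
lra.
Qed.

Lemma RD_gam_r r t : RD (fun r => gam r t) r (ee t).
Proof.
apply RD_eps. intros eps Heps. exists 1. split. lra. intros s Hs.
replace (gam s t - gam r t - RtoC (s - r) * ee t)%C with (RtoC 0).
rewrite Cmod_R, Rabs_R0. pose proof (Rabs_pos (s - r)). nra.
unfold gam, ee, RtoC, Cmult, Cminus, Cplus, Copp; simpl. f_equal; ring.
Qed.

Lemma RD_gam_t r t : RD (fun t => gam r t) t (Ci * gam r t)%C.
Proof.
replace (Ci * gam r t)%C with (r * - sin t, r * cos t).
apply RD_pair.
apply is_derive_scal. apply is_derive_cos.
apply is_derive_scal. apply is_derive_sin.
unfold Ci, gam, Cmult; simpl. f_equal; ring.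
Qed.

Lemma RD_comp (F : C -> C) (g : R -> C) t l v :
  CD F (g t) l -> RD g t v -> RD (fun s => F (g s)) t (l * v)%C.
Proof.
intros HF Hg. rewrite CD_eps in HF. rewrite RD_eps in Hg |- *.
intros eps Heps.
set (A := Cmod v + 1). assert (HA : 0 < A) by (pose proof (Cmod_ge_0 v); unfold A; lra).
set (L := Cmod l + 1). assert (HL : 0 < L) by (pose proof (Cmod_ge_0 l); unfold L; lra).
destruct (HF (eps / (2 * A))) as [d1 [Hd1 H1]]. apply Rdiv_lt_0_compat; lra.
destruct (Hg (Rmin 1 (eps / (2 * L)))) as [d2 [Hd2 H2]].
apply Rmin_pos. lra. apply Rdiv_lt_0_compat; lra.
exists (Rmin d2 (d1 / A)). split. apply Rmin_pos; auto. apply Rdiv_lt_0_compat; lra.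
intros s Hs.
assert (Hs2 : Rabs (s - t) < d2) by (eapply Rlt_le_trans; [exact Hs| apply Rmin_l]).
assert (Hs1 : Rabs (s - t) < d1 / A) by (eapply Rlt_le_trans; [exact Hs| apply Rmin_r]).
specialize (H2 s Hs2).
assert (Hgb : Cmod (g s - g t) <= A * Rabs (s - t)).
{ replace (g s - g t)%C with ((g s - g t - RtoC (s - t) * v) + RtoC (s - t) * v)%C by ring.
  eapply Rle_trans. apply Cmod_triangle. rewrite Cmod_mult, Cmod_R.
  pose proof (Rmin_l 1 (eps / (2 * L))). pose proof (Rabs_pos (s - t)).
  unfold A. nra. }
assert (Hgd : Cmod (g s - g t) < d1).
{ eapply Rle_lt_trans. exact Hgb. apply (Rmult_lt_compat_l A) in Hs1; auto.
  replace (A * (d1 / A)) with d1 in Hs1 by (field; lra). lra. }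
specialize (H1 (g s) Hgd).
replace (F (g s) - F (g t) - RtoC (s - t) * (l * v))%C with
  ((F (g s) - F (g t) - l * (g s - g t)) + l * (g s - g t - RtoC (s - t) * v))%C by ring.
eapply Rle_trans. apply Cmod_triangle. rewrite Cmod_mult.
pose proof (Rmin_r 1 (eps / (2 * L))).
pose proof (Rabs_pos (s - t)). pose proof (Cmod_ge_0 l).
assert (X1 : eps / (2 * A) * Cmod (g s - g t) <= eps / 2 * Rabs (s - t)).
{ apply Rle_trans with (eps / (2 * A) * (A * Rabs (s - t))).
  apply Rmult_le_compat_l. apply Rlt_le, Rdiv_lt_0_compat; lra. exact Hgb.
  right. field. lra. }
assert (X2 : Cmod l * Cmod (g s - g t - RtoC (s - t) * v) <= eps / 2 * Rabs (s - t)).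
{ apply Rle_trans with (Cmod l * (eps / (2 * L) * Rabs (s - t))).
  apply Rmult_le_compat_l. auto.
  eapply Rle_trans. exact H2. apply Rmult_le_compat_r; auto.
  apply Rle_trans with (L * (eps / (2 * L) * Rabs (s - t))).
  apply Rmult_le_compat_r. apply Rmult_le_pos. apply Rlt_le, Rdiv_lt_0_compat; lra. auto.
  unfold L; lra. right. field. lra. }
lra.
Qed.

Lemma RD_cont g t v : RD g t v -> @continuous R_UniformSpace C_R_NormedModule g t.
Proof. intros H. apply (ex_derive_continuous (K:=R_AbsRing)). exists v. exact H. Qed.

Lemma CD_cont f z l : CD f z l -> @continuous (AbsRing_UniformSpace C_AbsRing) C_NormedModule f z.
Proof. intros H. apply (ex_derive_continuous (K:=C_AbsRing) (V:=C_NormedModule)). exists l. exact H. Qed.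

Lemma CD_inv (z : C) : z <> 0%C -> CD (fun w => / w)%C z (- / (z * z))%C.
Proof.
intros Hz. apply CD_eps. intros eps Heps.
assert (Hm : 0 < Cmod z) by (apply (proj1 (Cmod_gt_0 z)); exact Hz).
exists (Rmin (Cmod z / 2) (eps * Cmod z ^ 3 / 2)). split.
apply Rmin_pos. lra. apply Rdiv_lt_0_compat. apply Rmult_lt_0_compat; auto. apply pow_lt; auto. lra.
intros w Hw.
assert (Hw1 : Cmod (w - z) < Cmod z / 2) by (eapply Rlt_le_trans; [exact Hw | apply Rmin_l]).
assert (Hw2 : Cmod (w - z) < eps * Cmod z ^ 3 / 2) by (eapply Rlt_le_trans; [exact Hw | apply Rmin_r]).
assert (Hwz : Cmod z / 2 <= Cmod w).
{ pose proof (Cmod_triangle w (z - w)). replace (w + (z - w))%C with z in H by ring.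
  replace (z - w)%C with (- (w - z))%C in H by ring. rewrite Cmod_opp in H. lra. }
assert (Hw0 : w <> 0%C). { intro E. subst. rewrite Cmod_0 in Hwz. lra. }
replace (/ w - / z - - / (z * z) * (w - z))%C with ((w - z) * (w - z) / (w * (z * z)))%C
  by (field; auto).
rewrite Cmod_div. 2:{ apply Cmult_neq_0; auto. apply Cmult_neq_0; auto. }
rewrite !Cmod_mult.
pose proof (Cmod_ge_0 (w - z)).
apply Rle_trans with (Cmod (w - z) * (Cmod (w - z) / (Cmod z / 2 * (Cmod z * Cmod z)))).
- unfold Rdiv. rewrite Rmult_assoc. apply Rmult_le_compat_l; auto.
  apply Rmult_le_compat_l; auto. apply Rinv_le_contravar.
  apply Rmult_lt_0_compat. lra. nra. apply Rmult_le_compat_r. nra. auto.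
- rewrite Rmult_comm. apply Rmult_le_compat_r; auto.
  apply Rle_trans with ((eps * Cmod z ^ 3 / 2) / (Cmod z / 2 * (Cmod z * Cmod z))).
  apply Rmult_le_compat_r. apply Rlt_le, Rinv_0_lt_compat. nra. lra.
  right. field. lra.
Qed.

Definition CI (f : R -> C) (a b : R) : C := @RInt C_R_CompleteNormedModule f a b.
Definition isCI (f : R -> C) (a b : R) (l : C) := @is_RInt C_R_NormedModule f a b l.
Definition exCI (f : R -> C) (a b : R) := @ex_RInt C_R_NormedModule f a b.

Lemma CI_correct f a b : exCI f a b -> isCI f a b (CI f a b).
Proof. intros H. apply (RInt_correct (V:=C_R_CompleteNormedModule)). exact H. Qed.

Lemma CI_unique f a b l : isCI f a b l -> CI f a b = l.
Proof. intros H. apply (is_RInt_unique (V:=C_R_CompleteNormedModule)). exact H. Qed.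

Lemma exCI_cont f a b : a <= b ->
  (forall x, a <= x <= b -> @continuous R_UniformSpace C_R_NormedModule f x) -> exCI f a b.
Proof.
intros Hab H. apply (ex_RInt_continuous (V:=C_R_CompleteNormedModule)).
intros z Hz. rewrite Rmin_left, Rmax_right in Hz by lra. apply H. exact Hz.
Qed.

Lemma isCI_plus f g a b lf lg : isCI f a b lf -> isCI g a b lg ->
  isCI (fun x => f x + g x)%C a b (lf + lg)%C.
Proof. intros Hf Hg. apply (is_RInt_plus (V:=C_R_NormedModule) f g a b lf lg Hf Hg). Qed.

Lemma isCI_opp f a b lf : isCI f a b lf -> isCI (fun x => - f x)%C a b (- lf)%C.
Proof. intros Hf. apply (is_RInt_opp (V:=C_R_NormedModule) f a b lf Hf). Qed.

Lemma isCI_minus f g a b lf lg : isCI f a b lf -> isCI g a b lg ->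
  isCI (fun x => f x - g x)%C a b (lf - lg)%C.
Proof. intros Hf Hg. apply (is_RInt_minus (V:=C_R_NormedModule) f g a b lf lg Hf Hg). Qed.

Lemma isCI_scalR f a b (k : R) lf : isCI f a b lf -> isCI (fun x => RtoC k * f x)%C a b (RtoC k * lf)%C.
Proof.
intros Hf. pose proof (is_RInt_scal (V:=C_R_NormedModule) f a b k lf Hf).
unfold isCI. rewrite <- scal_CR. eapply is_RInt_ext. 2: exact H.
intros x _. simpl. rewrite scal_CR. reflexivity.
Qed.

Lemma isCI_mult_l f a b (c : C) lf : isCI f a b lf -> isCI (fun x => c * f x)%C a b (c * lf)%C.
Proof.
intros Hf.
destruct c as [c1 c2].
assert (H1 := is_RInt_fct_extend_fst (U:=R_NormedModule) (V:=R_NormedModule) f a b lf Hf).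
assert (H2 := is_RInt_fct_extend_snd (U:=R_NormedModule) (V:=R_NormedModule) f a b lf Hf).
unfold isCI.
replace ((c1, c2) * lf)%C with ((c1 * fst lf - c2 * snd lf), (c1 * snd lf + c2 * fst lf)).
2:{ destruct lf; unfold Cmult; simpl. f_equal; ring. }
apply (is_RInt_fct_extend_pair (U:=R_NormedModule) (V:=R_NormedModule)).
- eapply is_RInt_ext.
  2: { apply (is_RInt_minus (V:=R_NormedModule)).
       apply (is_RInt_scal (V:=R_NormedModule)). exact H1.
       apply (is_RInt_scal (V:=R_NormedModule)). exact H2. }
  intros x _. unfold Cmult; simpl. unfold minus, plus, opp, scal; simpl.
  unfold mult; simpl. ring.
- eapply is_RInt_ext.
  2: { apply (is_RInt_plus (V:=R_NormedModule)).
       apply (is_RInt_scal (V:=R_NormedModule)). exact H2.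
       apply (is_RInt_scal (V:=R_NormedModule)). exact H1. }
  intros x _. unfold Cmult; simpl. unfold minus, plus, opp, scal; simpl.
  unfold mult; simpl. ring.
Qed.

Lemma isCI_ext f g a b l : (forall x, Rmin a b <= x <= Rmax a b -> f x = g x) -> isCI f a b l -> isCI g a b l.
Proof.
intros H Hf. apply (is_RInt_ext (V:=C_R_NormedModule) f). intros x Hx. apply H. lra. exact Hf.
Qed.

Lemma CI_Chasles f a b c : exCI f a b -> exCI f b c -> (CI f a b + CI f b c)%C = CI f a c.
Proof. intros H1 H2. apply (RInt_Chasles (V:=C_R_CompleteNormedModule)); auto. Qed.

Lemma CI_bound f a b B : a <= b -> exCI f a b ->
  (forall x, a <= x <= b -> Cmod (f x) <= B) -> Cmod (CI f a b) <= (b - a) * B.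
Proof.
intros Hab Hex HB.
rewrite <- norm_CR.
apply (norm_RInt_le (V:=C_R_NormedModule) f (fun _ => B) a b (CI f a b) ((b - a) * B)); auto.
intros x Hx. rewrite norm_CR. apply HB. auto.
apply CI_correct. auto.
replace ((b - a) * B) with (@scal R_AbsRing R_NormedModule (b - a) B). apply (is_RInt_const (V:=R_NormedModule)).
unfold scal; simpl. unfold mult; simpl. ring.
Qed.

Lemma CI_bound_fun f g a b lg : a <= b -> exCI f a b -> is_RInt g a b lg ->
  (forall x, a <= x <= b -> Cmod (f x) <= g x) -> Cmod (CI f a b) <= lg.
Proof.
intros Hab Hex Hg HB.
rewrite <- norm_CR.
apply (norm_RInt_le (V:=C_R_NormedModule) f g a b (CI f a b) lg); auto.
intros x Hx. rewrite norm_CR. apply HB. auto.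
apply CI_correct. auto.
Qed.

Lemma CI_FTC (F f : R -> C) a b : a <= b ->
  (forall x, a <= x <= b -> RD F x (f x)) ->
  (forall x, a <= x <= b -> @continuous R_UniformSpace C_R_NormedModule f x) ->
  isCI f a b (F b - F a)%C.
Proof.
intros Hab HD Hc.
apply (is_RInt_derive (V:=C_R_CompleteNormedModule) F f a b).
intros x Hx. rewrite Rmin_left, Rmax_right in Hx by lra. apply HD. auto.
intros x Hx. rewrite Rmin_left, Rmax_right in Hx by lra. apply Hc. auto.
Qed.

Lemma isCI_RtoC (p : R -> R) a b l : is_RInt p a b l -> isCI (fun x => RtoC (p x)) a b (RtoC l).
Proof.
intros H. unfold isCI, RtoC.
apply (is_RInt_fct_extend_pair (U:=R_NormedModule) (V:=R_NormedModule)). simpl. exact H.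
simpl. assert (H0 := is_RInt_const (V:=R_NormedModule) a b 0).
unfold scal in H0; simpl in H0; unfold mult in H0; simpl in H0; rewrite Rmult_0_r in H0. exact H0.
Qed.

Definition ccont (G : C -> C) (w : C) := forall eps, 0 < eps -> exists delta, 0 < delta /\
  forall w', Cmod (w' - w) < delta -> Cmod (G w' - G w) < eps.
Definition rcont (f : R -> C) (x : R) := forall eps, 0 < eps -> exists delta, 0 < delta /\
  forall y, Rabs (y - x) < delta -> Cmod (f y - f x) < eps.

Lemma rcont_continuous f x : rcont f x -> @continuous R_UniformSpace C_R_NormedModule f x.
Proof.
intros H. unfold continuous. apply (filterlim_locally (U:=C_R_NormedModule)).
intros eps. destruct (H eps (cond_pos eps)) as [d [Hd H']].
exists (mkposreal d Hd). intros y Hy. apply (norm_compat1 (K:=R_AbsRing) (V:=C_R_NormedModule)).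
rewrite norm_CR. apply H'. exact Hy.
Qed.

Lemma CD_ccont f z l : CD f z l -> ccont f z.
Proof.
intros H. rewrite CD_eps in H. intros eps Heps.
destruct (H 1 Rlt_0_1) as [d [Hd H']].
set (L := Cmod l + 1). assert (HL : 0 < L) by (pose proof (Cmod_ge_0 l); unfold L; lra).
exists (Rmin d (eps / L)). split. apply Rmin_pos; auto. apply Rdiv_lt_0_compat; lra.
intros w Hw.
assert (Hw1 : Cmod (w - z) < d) by (eapply Rlt_le_trans; [exact Hw | apply Rmin_l]).
assert (Hw2 : Cmod (w - z) < eps / L) by (eapply Rlt_le_trans; [exact Hw | apply Rmin_r]).
specialize (H' w Hw1).
replace (f w - f z)%C with ((f w - f z - l * (w - z)) + l * (w - z))%C by ring.
eapply Rle_lt_trans. apply Cmod_triangle. rewrite Cmod_mult.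
apply Rle_lt_trans with (L * Cmod (w - z)). unfold L. lra.
apply (Rmult_lt_compat_l L) in Hw2; auto. replace (L * (eps / L)) with eps in Hw2 by (field; lra). exact Hw2.
Qed.

Lemma RD_rcont g t v : RD g t v -> rcont g t.
Proof.
intros H. rewrite RD_eps in H. intros eps Heps.
destruct (H 1 Rlt_0_1) as [d [Hd H']].
set (L := Cmod v + 1). assert (HL : 0 < L) by (pose proof (Cmod_ge_0 v); unfold L; lra).
exists (Rmin d (eps / L)). split. apply Rmin_pos; auto. apply Rdiv_lt_0_compat; lra.
intros w Hw.
assert (Hw1 : Rabs (w - t) < d) by (eapply Rlt_le_trans; [exact Hw | apply Rmin_l]).
assert (Hw2 : Rabs (w - t) < eps / L) by (eapply Rlt_le_trans; [exact Hw | apply Rmin_r]).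
specialize (H' w Hw1).
replace (g w - g t)%C with ((g w - g t - RtoC (w - t) * v) + RtoC (w - t) * v)%C by ring.
eapply Rle_lt_trans. apply Cmod_triangle. rewrite Cmod_mult, Cmod_R.
apply Rle_lt_trans with (L * Rabs (w - t)). unfold L. pose proof (Rabs_pos (w - t)). nra.
apply (Rmult_lt_compat_l L) in Hw2; auto. replace (L * (eps / L)) with eps in Hw2 by (field; lra). exact Hw2.
Qed.

Lemma rcont_comp (G : C -> C) (g : R -> C) x : rcont g x -> ccont G (g x) -> rcont (fun y => G (g y)) x.
Proof.
intros H1 H2 eps Heps. destruct (H2 eps Heps) as [d [Hd H']].
destruct (H1 d Hd) as [d2 [Hd2 H'']]. exists d2. split; [exact Hd2|].
intros y Hy. apply H'. apply H''. exact Hy.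
Qed.

Lemma rcont_mult (f g : R -> C) x : rcont f x -> rcont g x -> rcont (fun y => f y * g y)%C x.
Proof.
intros H1 H2 eps Heps.
set (A := Cmod (f x) + 1). set (B := Cmod (g x) + 1).
assert (HA : 0 < A) by (pose proof (Cmod_ge_0 (f x)); unfold A; lra).
assert (HB : 0 < B) by (pose proof (Cmod_ge_0 (g x)); unfold B; lra).
destruct (H1 (Rmin 1 (eps / (2 * B)))) as [d1 [Hd1 K1]]. apply Rmin_pos. lra. apply Rdiv_lt_0_compat; lra.
destruct (H2 (eps / (2 * (A + 1)))) as [d2 [Hd2 K2]]. apply Rdiv_lt_0_compat; lra.
exists (Rmin d1 d2). split. apply Rmin_pos; auto.
intros y Hy.
assert (Y1 : Rabs (y - x) < d1) by (eapply Rlt_le_trans; [exact Hy | apply Rmin_l]).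
assert (Y2 : Rabs (y - x) < d2) by (eapply Rlt_le_trans; [exact Hy | apply Rmin_r]).
specialize (K1 y Y1). specialize (K2 y Y2).
pose proof (Rmin_l 1 (eps / (2 * B))). pose proof (Rmin_r 1 (eps / (2 * B))).
replace (f y * g y - f x * g x)%C with ((f y - f x) * g x + f y * (g y - g x))%C by ring.
eapply Rle_lt_trans. apply Cmod_triangle. rewrite !Cmod_mult.
assert (Fy : Cmod (f y) <= A + 1).
{ replace (f y) with ((f y - f x) + f x)%C by ring. eapply Rle_trans. apply Cmod_triangle. unfold A. lra. }
assert (P1 : Cmod (f y - f x) * Cmod (g x) <= eps / 2).
{ apply Rle_trans with ((eps / (2 * B)) * B).
  apply Rmult_le_compat. apply Cmod_ge_0. apply Cmod_ge_0. lra. unfold B; lra.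
  right. field. lra. }
assert (P2 : Cmod (f y) * Cmod (g y - g x) < eps / 2).
{ apply Rle_lt_trans with ((A + 1) * Cmod (g y - g x)).
  apply Rmult_le_compat_r. apply Cmod_ge_0. auto.
  apply Rlt_le_trans with ((A + 1) * (eps / (2 * (A + 1)))).
  apply Rmult_lt_compat_l. lra. auto. right. field. lra. }
lra.
Qed.

Lemma rcont_const (c : C) x : rcont (fun _ => c) x.
Proof. intros eps Heps. exists 1. split. lra. intros. replace (c - c)%C with (RtoC 0) by ring. rewrite Cmod_0. auto. Qed.

Lemma rcont_gam_r r t : rcont (fun r => gam r t) r.
Proof. apply (RD_rcont _ _ _ (RD_gam_r r t)). Qed.

Lemma rcont_gam_t r t : rcont (fun t => gam r t) t.
Proof. apply (RD_rcont _ _ _ (RD_gam_t r t)). Qed.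

Definition radf G th := fun r => (G (gam r th) * ee th)%C.
Definition arcf G rho := fun t => (G (gam rho t) * (Ci * gam rho t))%C.
Definition rad G th a b := CI (radf G th) a b.
Definition arc G rho al be := CI (arcf G rho) al be.
Definition SI G a b al be := (rad G al a b + arc G b al be - rad G be a b - arc G a al be)%C.

Lemma rcont_radf G th r : ccont G (gam r th) -> rcont (radf G th) r.
Proof.
intros H. unfold radf. apply rcont_mult. apply (rcont_comp G (fun r => gam r th)). apply rcont_gam_r. exact H.
apply rcont_const.
Qed.

Lemma rcont_arcf G rho t : ccont G (gam rho t) -> rcont (arcf G rho) t.
Proof.
intros H. unfold arcf. apply rcont_mult. apply (rcont_comp G (fun t => gam rho t)). apply rcont_gam_t. exact H.
apply rcont_mult. apply rcont_const. apply rcont_gam_t.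
Qed.

Lemma ex_rad G th a b : a <= b -> (forall r, a <= r <= b -> ccont G (gam r th)) -> exCI (radf G th) a b.
Proof. intros Hab H. apply exCI_cont; auto. intros. apply rcont_continuous, rcont_radf. auto. Qed.

Lemma ex_arc G rho al be : al <= be -> (forall t, al <= t <= be -> ccont G (gam rho t)) -> exCI (arcf G rho) al be.
Proof. intros Hab H. apply exCI_cont; auto. intros. apply rcont_continuous, rcont_arcf. auto. Qed.

Definition EC G a b al be :=
  (forall r, a <= r <= b -> ccont G (gam r al) /\ ccont G (gam r be)) /\
  (forall t, al <= t <= be -> ccont G (gam a t) /\ ccont G (gam b t)).

Lemma split_r G a c b al be : a <= c -> c <= b -> al <= be ->
  EC G a c al be -> EC G c b al be ->
  SI G a b al be = (SI G a c al be + SI G c b al be)%C.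
Proof.
intros H1 H2 H3 [E1 E2] [E3 E4].
unfold SI, rad.
rewrite <- (CI_Chasles (radf G al) a c b), <- (CI_Chasles (radf G be) a c b).
ring.
all: apply ex_rad; auto; intros r Hr; try apply (E1 r Hr); try apply (E3 r Hr).
Qed.

Lemma split_t G a b al ga be : a <= b -> al <= ga -> ga <= be ->
  EC G a b al ga -> EC G a b ga be ->
  SI G a b al be = (SI G a b al ga + SI G a b ga be)%C.
Proof.
intros H1 H2 H3 [E1 E2] [E3 E4].
unfold SI, arc.
rewrite <- (CI_Chasles (arcf G b) al ga be), <- (CI_Chasles (arcf G a) al ga be).
ring.
all: apply ex_arc; auto; intros r Hr; try apply (E2 r Hr); try apply (E4 r Hr).
Qed.

Lemma Cmod_Ci_gam r t : 0 <= r -> Cmod (Ci * gam r t) = r.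
Proof.
intros Hr. rewrite Cmod_mult, Cmod_gam by auto.
replace (Cmod Ci) with 1. ring.
unfold Cmod, Ci; simpl. symmetry. transitivity (sqrt 1). f_equal. ring. apply sqrt_1.
Qed.

Lemma SI_bound G a b al be B : 0 <= a -> a <= b -> al <= be -> EC G a b al be ->
  (forall r, a <= r <= b -> Cmod (G (gam r al)) <= B /\ Cmod (G (gam r be)) <= B) ->
  (forall t, al <= t <= be -> Cmod (G (gam a t)) <= B /\ Cmod (G (gam b t)) <= B) ->
  Cmod (SI G a b al be) <= (2 * (b - a) + (a + b) * (be - al)) * B.
Proof.
intros Ha Hab Hal [E1 E2] B1 B2.
assert (R1 : forall th, (forall r, a <= r <= b -> ccont G (gam r th) /\ Cmod (G (gam r th)) <= B) ->
  Cmod (rad G th a b) <= (b - a) * B).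
{ intros th Hth. apply CI_bound; auto. apply ex_rad; auto. intros; apply Hth; auto.
  intros x Hx. unfold radf. rewrite Cmod_mult, Cmod_ee, Rmult_1_r. apply Hth; auto. }
assert (R2 : forall rho, 0 <= rho -> (forall t, al <= t <= be -> ccont G (gam rho t) /\ Cmod (G (gam rho t)) <= B) ->
  Cmod (arc G rho al be) <= (be - al) * (rho * B)).
{ intros rho Hrho Hth. apply CI_bound; auto. apply ex_arc; auto. intros; apply Hth; auto.
  intros x Hx. unfold arcf. rewrite Cmod_mult, Cmod_Ci_gam by auto.
  rewrite Rmult_comm. apply Rmult_le_compat_l; auto. apply Hth; auto. }
assert (X1 : Cmod (rad G al a b) <= (b - a) * B) by (apply R1; intros r Hr; split; [apply E1|apply B1]; auto).
assert (X2 : Cmod (rad G be a b) <= (b - a) * B) by (apply R1; intros r Hr; split; [apply E1|apply B1]; auto).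
assert (X3 : Cmod (arc G a al be) <= (be - al) * (a * B)) by (apply R2; auto; intros r Hr; split; [apply E2|apply B2]; auto).
assert (X4 : Cmod (arc G b al be) <= (be - al) * (b * B)) by (apply R2; try lra; intros r Hr; split; [apply E2|apply B2]; auto).
unfold SI.
eapply Rle_trans. apply Cmod_triangle.
eapply Rle_trans. apply Rplus_le_compat_r. apply Cmod_triangle.
eapply Rle_trans. apply Rplus_le_compat_r. apply Rplus_le_compat_r. apply Cmod_triangle.
rewrite !Cmod_opp.
nra.
Qed.

Lemma rad_prim K g th a b : a <= b ->
  (forall r, a <= r <= b -> CD K (gam r th) (g (gam r th)) /\ ccont g (gam r th)) ->
  rad g th a b = (K (gam b th) - K (gam a th))%C.
Proof.
intros Hab H. unfold rad. apply CI_unique.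
apply (CI_FTC (fun r => K (gam r th))); auto.
- intros x Hx. unfold radf. apply RD_comp. apply H; auto. apply RD_gam_r.
- intros x Hx. apply rcont_continuous, rcont_radf. apply H; auto.
Qed.

Lemma arc_prim K g rho al be : al <= be ->
  (forall t, al <= t <= be -> CD K (gam rho t) (g (gam rho t)) /\ ccont g (gam rho t)) ->
  arc g rho al be = (K (gam rho be) - K (gam rho al))%C.
Proof.
intros Hab H. unfold arc. apply CI_unique.
apply (CI_FTC (fun t => K (gam rho t))); auto.
- intros x Hx. unfold arcf. apply RD_comp. apply H; auto. apply RD_gam_t.
- intros x Hx. apply rcont_continuous, rcont_arcf. apply H; auto.
Qed.

Lemma SI_prim K g a b al be : a <= b -> al <= be ->
  (forall r t, a <= r <= b -> al <= t <= be -> CD K (gam r t) (g (gam r t)) /\ ccont g (gam r t)) ->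
  SI g a b al be = 0%C.
Proof.
intros Hab Hal H. unfold SI.
rewrite (rad_prim K g al a b), (rad_prim K g be a b), (arc_prim K g a al be), (arc_prim K g b al be); auto.
ring.
all: intros; apply H; lra.
Qed.

Lemma ccont_minus f g z : ccont f z -> ccont g z -> ccont (fun w => f w - g w)%C z.
Proof.
intros H1 H2 eps Heps.
destruct (H1 (eps/2)) as [d1 [Hd1 K1]]. lra.
destruct (H2 (eps/2)) as [d2 [Hd2 K2]]. lra.
exists (Rmin d1 d2). split. apply Rmin_pos; auto.
intros w Hw.
assert (Y1 : Cmod (w - z) < d1) by (eapply Rlt_le_trans; [exact Hw | apply Rmin_l]).
assert (Y2 : Cmod (w - z) < d2) by (eapply Rlt_le_trans; [exact Hw | apply Rmin_r]).
specialize (K1 w Y1). specialize (K2 w Y2).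
replace (f w - g w - (f z - g z))%C with ((f w - f z) + - (g w - g z))%C by ring.
eapply Rle_lt_trans. apply Cmod_triangle. rewrite Cmod_opp. lra.
Qed.

Lemma EC_minus G1 G2 a b al be : EC G1 a b al be -> EC G2 a b al be -> EC (fun w => G1 w - G2 w)%C a b al be.
Proof.
intros [A1 A2] [B1 B2]. split.
intros r Hr. destruct (A1 r Hr), (B1 r Hr). split; apply ccont_minus; auto.
intros t Ht. destruct (A2 t Ht), (B2 t Ht). split; apply ccont_minus; auto.
Qed.

Lemma SI_minus G1 G2 a b al be : a <= b -> al <= be -> EC G1 a b al be -> EC G2 a b al be ->
  SI (fun w => G1 w - G2 w)%C a b al be = (SI G1 a b al be - SI G2 a b al be)%C.
Proof.
intros Hab Hal [A1 A2] [B1 B2].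
assert (Rr : forall th, (forall r, a <= r <= b -> ccont G1 (gam r th) /\ ccont G2 (gam r th)) ->
   rad (fun w => G1 w - G2 w)%C th a b = (rad G1 th a b - rad G2 th a b)%C).
{ intros th Hth. unfold rad. apply CI_unique.
  apply isCI_ext with (fun x => radf G1 th x - radf G2 th x)%C.
  intros x _. unfold radf. ring.
  apply isCI_minus; apply CI_correct; apply ex_rad; auto; intros; apply Hth; auto. }
assert (Ra : forall rho, (forall t, al <= t <= be -> ccont G1 (gam rho t) /\ ccont G2 (gam rho t)) ->
   arc (fun w => G1 w - G2 w)%C rho al be = (arc G1 rho al be - arc G2 rho al be)%C).
{ intros rho Hth. unfold arc. apply CI_unique.
  apply isCI_ext with (fun x => arcf G1 rho x - arcf G2 rho x)%C.
  intros x _. unfold arcf. ring.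
  apply isCI_minus; apply CI_correct; apply ex_arc; auto; intros; apply Hth; auto. }
unfold SI. rewrite !Rr, !Ra. ring.
all: intros x Hx; first [destruct (A1 x Hx), (B1 x Hx) | destruct (A2 x Hx), (B2 x Hx)]; auto.
Qed.

Lemma CD_affine (c L p : C) w : CD (fun w => c + L * (w - p))%C w L.
Proof.
apply CD_eps. intros eps Heps. exists 1. split. lra. intros w' _.
replace (c + L * (w' - p) - (c + L * (w - p)) - L * (w' - w))%C with (RtoC 0) by ring.
rewrite Cmod_0. pose proof (Cmod_ge_0 (w' - w)). nra.
Qed.

Lemma CD_prim_affine (c L p : C) w :
  CD (fun w => c * w + L * ((w - p) * (w - p)) / 2)%C w (c + L * (w - p))%C.
Proof.
apply CD_eps. intros eps Heps.
set (M := Cmod L + 1). assert (HM : 0 < M) by (pose proof (Cmod_ge_0 L); unfold M; lra).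
exists (2 * eps / M). split. apply Rdiv_lt_0_compat; lra.
intros w' Hw'.
replace (c * w' + L * ((w' - p) * (w' - p)) / 2 - (c * w + L * ((w - p) * (w - p)) / 2) -
   (c + L * (w - p)) * (w' - w))%C with (L * (w' - w) * (w' - w) / 2)%C.
2:{ field. }
rewrite Cmod_div. 2:{ intro E. injection E. lra. }
rewrite !Cmod_mult.
replace (Cmod 2) with 2. 2:{ unfold Cmod; simpl. replace (2 * (2 * 1) + 0 * (0 * 1)) with (2 * 2) by ring.
  rewrite sqrt_square; lra. }
pose proof (Cmod_ge_0 (w' - w)).
apply Rle_trans with (M * Cmod (w' - w) * Cmod (w' - w) / 2).
unfold Rdiv. apply Rmult_le_compat_r. lra. apply Rmult_le_compat_r. auto. apply Rmult_le_compat_r. auto. unfold M; lra.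
apply Rle_trans with (M * (2 * eps / M) * Cmod (w' - w) / 2).
unfold Rdiv. apply Rmult_le_compat_r. lra. apply Rmult_le_compat_r. auto. apply Rmult_le_compat_l. lra. lra.
right. field. lra.
Qed.

Lemma SI_affine (c L p : C) a b al be : a <= b -> al <= be -> SI (fun w => c + L * (w - p))%C a b al be = 0%C.
Proof.
intros Hab Hal. apply (SI_prim (fun w => c * w + L * ((w - p) * (w - p)) / 2)%C); auto.
intros r t _ _. split. apply CD_prim_affine. apply (CD_ccont _ _ L). apply CD_affine.
Qed.

Lemma pow2_ge n : INR n + 1 <= 2 ^ n.
Proof.
induction n. simpl. lra. rewrite S_INR. simpl. pose proof (pos_INR n). lra.
Qed.

Lemma exists_small (W d : R) : 0 < d -> exists n : nat, W / 2 ^ n < d.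
Proof.
intros Hd. destruct (archimed (W / d)) as [H1 _].
assert (0 <= IZR (up (W / d)) \/ IZR (up (W / d)) < 0) as [Hp|Hn] by lra.
- destruct (IZN (up (W / d))) as [n Hn]. apply le_IZR. lra.
  exists n. rewrite Hn, <- INR_IZR_INZ in H1.
  pose proof (pow2_ge n). assert (0 < 2 ^ n) by (apply pow_lt; lra).
  apply Rmult_lt_reg_r with (2 ^ n); auto. unfold Rdiv. rewrite Rmult_assoc, Rinv_l by lra.
  rewrite Rmult_1_r.
  assert (W < d * INR n + d). { apply Rmult_lt_reg_r with (/ d). apply Rinv_0_lt_compat; auto.
    replace ((d * INR n + d) * / d) with (INR n + 1) by (field; lra). unfold Rdiv in H1. lra. }
  nra.
- exists 0%nat. simpl. unfold Rdiv. rewrite Rinv_1, Rmult_1_r.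
  assert (W / d < 0) by lra. apply Rmult_lt_reg_r with (/ d). apply Rinv_0_lt_compat; auto.
  unfold Rdiv in H. rewrite Rinv_r by lra. lra.
Qed.

Record rect := mkrect { ra : R; rb : R; ta : R; tb : R }.

Section Goursat.
Variable G : C -> C.
Variables a b al be : R.
Hypothesis Ha : 0 < a.
Hypothesis Hab : a < b.
Hypothesis Hal : al < be.
Hypothesis HG : forall r t, a <= r <= b -> al <= t <= be -> ex_derive (K:=C_AbsRing) (V:=C_NormedModule) G (gam r t).

Definition sub (Q : rect) := a <= ra Q /\ ra Q <= rb Q /\ rb Q <= b /\ al <= ta Q /\ ta Q <= tb Q /\ tb Q <= be.

Lemma Gcont r t : a <= r <= b -> al <= t <= be -> ccont G (gam r t).
Proof. intros H1 H2. destruct (HG r t H1 H2) as [l Hl]. apply (CD_ccont _ _ l). exact Hl. Qed.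

Lemma EC_sub ra' rb' ta' tb' : sub (mkrect ra' rb' ta' tb') -> EC G ra' rb' ta' tb'.
Proof.
intros [H1 [H2 [H3 [H4 [H5 H6]]]]]; simpl in *. split.
intros r Hr. split; apply Gcont; lra.
intros t Ht. split; apply Gcont; lra.
Qed.

Definition SIQ (Q : rect) := SI G (ra Q) (rb Q) (ta Q) (tb Q).
Definition area (Q : rect) := (rb Q - ra Q) * (tb Q - ta Q).
Definition mr Q := (ra Q + rb Q) / 2.
Definition mt Q := (ta Q + tb Q) / 2.
Definition q1 Q := mkrect (ra Q) (mr Q) (ta Q) (mt Q).
Definition q2 Q := mkrect (mr Q) (rb Q) (ta Q) (mt Q).
Definition q3 Q := mkrect (ra Q) (mr Q) (mt Q) (tb Q).
Definition q4 Q := mkrect (mr Q) (rb Q) (mt Q) (tb Q).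

Lemma SIQ_split Q : sub Q -> SIQ Q = (SIQ (q1 Q) + SIQ (q2 Q) + SIQ (q3 Q) + SIQ (q4 Q))%C.
Proof.
intros HQ. destruct Q as [r1 r2 t1 t2]. unfold SIQ, q1, q2, q3, q4, mr, mt; simpl.
destruct HQ as [H1 [H2 [H3 [H4 [H5 H6]]]]]; simpl in *.
rewrite (split_r G r1 ((r1 + r2) / 2) r2 t1 t2); try lra.
rewrite (split_t G r1 ((r1 + r2) / 2) t1 ((t1 + t2) / 2) t2); try lra.
rewrite (split_t G ((r1 + r2) / 2) r2 t1 ((t1 + t2) / 2) t2); try lra.
ring.
all: apply EC_sub; repeat split; simpl; lra.
Qed.

Variable c : R.

Definition sel (Q : rect) : rect :=
  if Rlt_dec (c * area (q1 Q)) (Cmod (SIQ (q1 Q))) then q1 Q else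
  if Rlt_dec (c * area (q2 Q)) (Cmod (SIQ (q2 Q))) then q2 Q else
  if Rlt_dec (c * area (q3 Q)) (Cmod (SIQ (q3 Q))) then q3 Q else q4 Q.

Lemma sel_geom Q : sub Q ->
  sub (sel Q) /\ ra Q <= ra (sel Q) /\ rb (sel Q) <= rb Q /\ ta Q <= ta (sel Q) /\ tb (sel Q) <= tb Q /\
  rb (sel Q) - ra (sel Q) = (rb Q - ra Q) / 2 /\ tb (sel Q) - ta (sel Q) = (tb Q - ta Q) / 2.
Proof.
intros [H1 [H2 [H3 [H4 [H5 H6]]]]]. unfold sel.
repeat (destruct Rlt_dec); unfold q1, q2, q3, q4, mr, mt, sub; simpl; repeat split; lra.
Qed.

Lemma sel_bad Q : sub Q -> c * area Q < Cmod (SIQ Q) -> c * area (sel Q) < Cmod (SIQ (sel Q)).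
Proof.
intros HQ Hbad. unfold sel.
destruct Rlt_dec as [h1|h1]; auto.
destruct Rlt_dec as [h2|h2]; auto.
destruct Rlt_dec as [h3|h3]; auto.
apply Rnot_lt_le in h1. apply Rnot_lt_le in h2. apply Rnot_lt_le in h3.
apply Rnot_le_lt. intro h4.
rewrite (SIQ_split Q HQ) in Hbad.
assert (Ea : area (q1 Q) + area (q2 Q) + area (q3 Q) + area (q4 Q) = area Q).
{ unfold area, q1, q2, q3, q4, mr, mt; simpl. field. }
pose proof (Cmod_triangle (SIQ (q1 Q) + SIQ (q2 Q) + SIQ (q3 Q)) (SIQ (q4 Q))).
pose proof (Cmod_triangle (SIQ (q1 Q) + SIQ (q2 Q)) (SIQ (q3 Q))).
pose proof (Cmod_triangle (SIQ (q1 Q)) (SIQ (q2 Q))).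
assert (c * area Q = c * area (q1 Q) + c * area (q2 Q) + c * area (q3 Q) + c * area (q4 Q)) by (rewrite <- Ea; ring).
lra.
Qed.

Fixpoint Qn (Q0 : rect) (n : nat) : rect :=
  match n with O => Q0 | S n => sel (Qn Q0 n) end.

Lemma Qn_props Q0 n : sub Q0 ->
  sub (Qn Q0 n) /\ rb (Qn Q0 n) - ra (Qn Q0 n) = (rb Q0 - ra Q0) / 2 ^ n /\
  tb (Qn Q0 n) - ta (Qn Q0 n) = (tb Q0 - ta Q0) / 2 ^ n.
Proof.
intros H0. induction n.
- simpl. split; auto. split; field.
- destruct IHn as [Hs [Hr Ht]]. simpl.
  destruct (sel_geom _ Hs) as [S1 [S2 [S3 [S4 [S5 [S6 S7]]]]]].
  split; auto. rewrite S6, S7, Hr, Ht. split; field; apply pow_nonzero; lra.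
Qed.

Lemma Qn_mono Q0 n m : sub Q0 -> (n <= m)%nat ->
  ra (Qn Q0 n) <= ra (Qn Q0 m) /\ rb (Qn Q0 m) <= rb (Qn Q0 n) /\
  ta (Qn Q0 n) <= ta (Qn Q0 m) /\ tb (Qn Q0 m) <= tb (Qn Q0 n).
Proof.
intros H0 Hnm. induction Hnm.
- lra.
- simpl. destruct (Qn_props Q0 m H0) as [Hs _].
  destruct (sel_geom _ Hs) as [S1 [S2 [S3 [S4 [S5 _]]]]]. lra.
Qed.

Lemma Qn_bad Q0 n : sub Q0 -> c * area Q0 < Cmod (SIQ Q0) -> c * area (Qn Q0 n) < Cmod (SIQ (Qn Q0 n)).
Proof.
intros H0 Hb. induction n. simpl; auto.
simpl. apply sel_bad; auto. apply Qn_props; auto.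
Qed.


Lemma goursat_c : 0 < c -> Cmod (SI G a b al be) <= c * ((b - a) * (be - al)).
Proof.
intros Hc. apply Rnot_lt_le. intro Hbad.
set (Q0 := mkrect a b al be).
assert (HQ0 : sub Q0) by (unfold sub, Q0; simpl; lra).
assert (Hb0 : c * area Q0 < Cmod (SIQ Q0)) by (unfold area, SIQ, Q0; simpl; lra).
set (E1 := fun x => exists n, x = ra (Qn Q0 n)).
set (E2 := fun x => exists n, x = ta (Qn Q0 n)).
assert (Hcross : forall n m, ra (Qn Q0 n) <= rb (Qn Q0 m) /\ ta (Qn Q0 n) <= tb (Qn Q0 m)).
{ intros n m. destruct (Qn_mono Q0 n (max n m) HQ0 (Nat.le_max_l n m)) as [A1 [_ [A3 _]]].
  destruct (Qn_mono Q0 m (max n m) HQ0 (Nat.le_max_r n m)) as [_ [B2 [_ B4]]].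
  destruct (Qn_props Q0 (max n m) HQ0) as [[_ [S2 [_ [_ [S5 _]]]]] _]. lra. }
destruct (completeness E1) as [rs [Hrs1 Hrs2]].
{ exists b. intros x [n Hn]. subst. destruct (Qn_props Q0 n HQ0) as [[_ [S2 [S3 _]]] _]. lra. }
{ exists a. exists 0%nat. reflexivity. }
destruct (completeness E2) as [ts [Hts1 Hts2]].
{ exists be. intros x [n Hn]. subst. destruct (Qn_props Q0 n HQ0) as [[_ [_ [_ [_ [S5 S6]]]]] _]. lra. }
{ exists al. exists 0%nat. reflexivity. }
assert (Hr : forall n, ra (Qn Q0 n) <= rs <= rb (Qn Q0 n)).
{ intros n. split. apply Hrs1. exists n; auto. apply Hrs2. intros x [m Hm]. subst. apply Hcross. }
assert (Ht : forall n, ta (Qn Q0 n) <= ts <= tb (Qn Q0 n)).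
{ intros n. split. apply Hts1. exists n; auto. apply Hts2. intros x [m Hm]. subst. apply Hcross. }
assert (Hrs_in : a <= rs <= b).
{ destruct (Hr 0%nat) as [X Y]. simpl in X, Y. unfold Q0 in X, Y; simpl in X, Y. lra. }
assert (Hts_in : al <= ts <= be).
{ destruct (Ht 0%nat) as [X Y]. simpl in X, Y. unfold Q0 in X, Y; simpl in X, Y. lra. }
set (p := gam rs ts).
destruct (HG rs ts Hrs_in Hts_in) as [L HL].
assert (HL' := proj1 (CD_eps _ _ _) HL).
set (W := (b - a) + b * (be - al)).
assert (HW : 0 < W) by (unfold W; nra).
set (eta := c * (b - a) * (be - al) / (4 * (W * W))).
assert (Heta : 0 < eta) by (unfold eta; apply Rdiv_lt_0_compat; [ repeat apply Rmult_lt_0_compat; lra | nra]).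
destruct (HL' eta Heta) as [d [Hd Hd']].
destruct (exists_small W d Hd) as [n Hn].
set (Q := Qn Q0 n).
destruct (Qn_props Q0 n HQ0) as [HsQ [Hdr Hdt]].
fold Q in HsQ, Hdr, Hdt. unfold Q0 in Hdr, Hdt; simpl in Hdr, Hdt.
assert (Hu : 0 < 2 ^ n) by (apply pow_lt; lra).
set (u := 2 ^ n) in *.
pose proof (Qn_bad Q0 n HQ0 Hb0) as Hbad'. fold Q in Hbad'.
set (A := fun w => (G p + L * (w - p))%C).
assert (Hclose : forall r t, ra Q <= r <= rb Q -> ta Q <= t <= tb Q -> Cmod (gam r t - p) <= W / u).
{ intros r t Hr' Ht'. unfold p. eapply Rle_trans. apply gam_diff.
  destruct (Hr n) as [X1 X2]. destruct (Ht n) as [Y1 Y2]. fold Q in X1, X2, Y1, Y2.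
  rewrite (Rabs_pos_eq rs) by lra.
  assert (Rabs (r - rs) <= rb Q - ra Q) by (apply Rabs_le; lra).
  assert (Rabs (t - ts) <= tb Q - ta Q) by (apply Rabs_le; lra).
  assert (W / u = (b - a) / u + b * ((be - al) / u)) by (unfold W; field; lra).
  rewrite H1, <- Hdr, <- Hdt.
  apply Rplus_le_compat; auto. apply Rmult_le_compat; try lra. apply Rabs_pos. }
assert (Hbd : forall r t, ra Q <= r <= rb Q -> ta Q <= t <= tb Q ->
   Cmod (G (gam r t) - A (gam r t)) <= eta * (W / u)).
{ intros r t Hr' Ht'. pose proof (Hclose r t Hr' Ht').
  assert (Cmod (gam r t - p) < d) by lra.
  specialize (Hd' _ H0). unfold A.
  replace (G (gam r t) - (G p + L * (gam r t - p)))%C with (G (gam r t) - G p - L * (gam r t - p))%C by ring.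
  eapply Rle_trans. exact Hd'. apply Rmult_le_compat_l. lra. exact H. }
destruct HsQ as [Z1 [Z2 [Z3 [Z4 [Z5 Z6]]]]].
assert (ECG : EC G (ra Q) (rb Q) (ta Q) (tb Q)) by (apply (EC_sub (ra Q) (rb Q) (ta Q) (tb Q)); unfold sub; simpl; lra).
assert (ECA : EC A (ra Q) (rb Q) (ta Q) (tb Q)).
{ split; intros; split; apply (CD_ccont _ _ L); apply CD_affine. }
assert (HSI : SIQ Q = SI (fun w => G w - A w)%C (ra Q) (rb Q) (ta Q) (tb Q)).
{ rewrite SI_minus by (auto; lra). unfold A. rewrite SI_affine by lra. unfold SIQ. ring. }
assert (Hbound : Cmod (SIQ Q) <= (2 * (rb Q - ra Q) + (ra Q + rb Q) * (tb Q - ta Q)) * (eta * (W / u))).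
{ rewrite HSI. apply SI_bound; try lra. apply EC_minus; auto.
  intros r Hr'. split; apply Hbd; lra.
  intros t Ht'. split; apply Hbd; lra. }
assert (Hgeo : 2 * (rb Q - ra Q) + (ra Q + rb Q) * (tb Q - ta Q) <= 2 * (W / u)).
{ assert (W / u = (b - a) / u + b * ((be - al) / u)) by (unfold W; field; lra).
  rewrite H, <- Hdr, <- Hdt. nra. }
assert (Harea : area Q = (b - a) * (be - al) / (u * u)).
{ unfold area. rewrite Hdr, Hdt. field. lra. }
assert (Hfin : (2 * (W / u)) * (eta * (W / u)) = c * area Q / 2).
{ rewrite Harea. unfold eta. field. split; lra. }
assert (Hpos : 0 <= eta * (W / u)) by (apply Rmult_le_pos; [lra | apply Rlt_le, Rdiv_lt_0_compat; lra]).
assert (Hcarea : 0 < c * area Q).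
{ rewrite Harea. apply Rmult_lt_0_compat; auto. apply Rdiv_lt_0_compat. nra. nra. }
assert (Cmod (SIQ Q) <= c * area Q / 2).
{ rewrite <- Hfin. eapply Rle_trans. exact Hbound. apply Rmult_le_compat_r; auto. }
lra.
Qed.

End Goursat.

Lemma goursat G a b al be : 0 < a -> a < b -> al < be ->
  (forall r t, a <= r <= b -> al <= t <= be -> ex_derive (K:=C_AbsRing) (V:=C_NormedModule) G (gam r t)) ->
  SI G a b al be = 0%C.
Proof.
intros Ha Hab Hal HG.
assert (Hpos : 0 < (b - a) * (be - al)) by nra.
apply Cmod_eq_0. apply Rle_antisym. 2: apply Cmod_ge_0.
apply Rnot_lt_le. intro H.
set (c0 := Cmod (SI G a b al be) / (2 * ((b - a) * (be - al)))).
assert (Hc : 0 < c0) by (unfold c0; apply Rdiv_lt_0_compat; lra).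
pose proof (goursat_c G a b al be Ha Hab Hal HG c0 Hc).
assert (c0 * ((b - a) * (be - al)) = Cmod (SI G a b al be) / 2) by (unfold c0; field; lra).
lra.
Qed.


Section Excep.
Variable G : C -> C.
Variables a b al be r0 t0 : R.
Hypothesis Ha : 0 < a.
Hypothesis Hr0 : a < r0 < b.
Hypothesis Ht0 : al < t0 < be.
Hypothesis HG : forall r t, a <= r <= b -> al <= t <= be -> (r <> r0 \/ t <> t0) ->
  ex_derive (K:=C_AbsRing) (V:=C_NormedModule) G (gam r t).
Variables B delta : R.
Hypothesis Hdelta : 0 < delta.
Hypothesis HB : forall w, Cmod (w - gam r0 t0) < delta -> Cmod (G w) <= B.

Lemma Gc r t : a <= r <= b -> al <= t <= be -> (r <> r0 \/ t <> t0) -> ccont G (gam r t).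
Proof. intros H1 H2 H3. destruct (HG r t H1 H2 H3) as [l Hl]. apply (CD_ccont _ _ l). exact Hl. Qed.

Lemma EC_grid a' b' al' be' : a <= a' -> a' <= b' -> b' <= b -> al <= al' -> al' <= be' -> be' <= be ->
  a' <> r0 -> b' <> r0 -> al' <> t0 -> be' <> t0 -> EC G a' b' al' be'.
Proof.
intros. split.
intros r Hr. split; apply Gc; auto; lra.
intros t Ht. split; apply Gc; auto; lra.
Qed.

Lemma piece0 a' b' al' be' : a <= a' -> a' < b' -> b' <= b -> al <= al' -> al' < be' -> be' <= be ->
  (b' < r0 \/ r0 < a' \/ be' < t0 \/ t0 < al') -> SI G a' b' al' be' = 0%C.
Proof.
intros. apply goursat; try lra.
intros r t Hr Ht. apply HG; try lra.
Qed.

Lemma excep_s s : 0 < s -> s < r0 - a -> s < b - r0 -> s < t0 - al -> s < be - t0 ->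
  SI G a b al be = SI G (r0 - s) (r0 + s) (t0 - s) (t0 + s).
Proof.
intros Hs H1 H2 H3 H4.
assert (Ne1 : r0 - s <> r0) by lra. assert (Ne2 : r0 + s <> r0) by lra.
assert (Ne3 : t0 - s <> t0) by lra. assert (Ne4 : t0 + s <> t0) by lra.
assert (Ne5 : a <> r0) by lra. assert (Ne6 : b <> r0) by lra.
assert (Ne7 : al <> t0) by lra. assert (Ne8 : be <> t0) by lra.
rewrite (split_r G a (r0 - s) b al be); try lra.
2,3: apply EC_grid; lra.
rewrite (split_r G (r0 - s) (r0 + s) b al be); try lra.
2,3: apply EC_grid; lra.
rewrite (piece0 a (r0 - s) al be) by lra.
rewrite (piece0 (r0 + s) b al be) by lra.
rewrite (split_t G (r0 - s) (r0 + s) al (t0 - s) be); try lra.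
2,3: apply EC_grid; lra.
rewrite (split_t G (r0 - s) (r0 + s) (t0 - s) (t0 + s) be); try lra.
2,3: apply EC_grid; lra.
rewrite (piece0 (r0 - s) (r0 + s) al (t0 - s)) by lra.
rewrite (piece0 (r0 - s) (r0 + s) (t0 + s) be) by lra.
ring.
Qed.

Lemma excep : SI G a b al be = 0%C.
Proof.
apply Cmod_eq_0. apply Rle_antisym. 2: apply Cmod_ge_0.
apply Rnot_lt_le. intro Hpos.
set (X := Cmod (SI G a b al be)) in *.
set (K := 4 * (1 + r0) * (Rabs B + 1)).
assert (HK : 0 < K) by (unfold K; pose proof (Rabs_pos B); nra).
set (s := Rmin (Rmin (Rmin ((r0 - a)/2) ((b - r0)/2)) (Rmin ((t0 - al)/2) ((be - t0)/2)))
           (Rmin (Rmin 1 (delta / (2 * (r0 + 1)))) (X / (2 * K)))).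
assert (Hs0 : 0 < s).
{ unfold s. repeat apply Rmin_pos; try lra; apply Rdiv_lt_0_compat; lra. }
assert (Hs1 : s <= (r0 - a)/2) by (unfold s; repeat (eapply Rle_trans; [apply Rmin_l|]); lra).
assert (Hs2 : s <= (b - r0)/2).
{ unfold s. eapply Rle_trans. apply Rmin_l. eapply Rle_trans. apply Rmin_l. apply Rmin_r. }
assert (Hs3 : s <= (t0 - al)/2).
{ unfold s. eapply Rle_trans. apply Rmin_l. eapply Rle_trans. apply Rmin_r. apply Rmin_l. }
assert (Hs4 : s <= (be - t0)/2).
{ unfold s. eapply Rle_trans. apply Rmin_l. eapply Rle_trans. apply Rmin_r. apply Rmin_r. }
assert (Hs5 : s <= 1).
{ unfold s. eapply Rle_trans. apply Rmin_r. eapply Rle_trans. apply Rmin_l. apply Rmin_l. }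
assert (Hs6 : s <= delta / (2 * (r0 + 1))).
{ unfold s. eapply Rle_trans. apply Rmin_r. eapply Rle_trans. apply Rmin_l. apply Rmin_r. }
assert (Hs7 : s <= X / (2 * K)).
{ unfold s. eapply Rle_trans. apply Rmin_r. apply Rmin_r. }
assert (EX : X = Cmod (SI G (r0 - s) (r0 + s) (t0 - s) (t0 + s))) by (unfold X; rewrite (excep_s s) by lra; reflexivity).
assert (Hclose : forall r t, r0 - s <= r <= r0 + s -> t0 - s <= t <= t0 + s ->
  Cmod (gam r t - gam r0 t0) < delta).
{ intros r t Hr Ht. eapply Rle_lt_trans. apply gam_diff.
  rewrite (Rabs_pos_eq r0) by lra.
  assert (Rabs (r - r0) <= s) by (apply Rabs_le; lra).
  assert (Rabs (t - t0) <= s) by (apply Rabs_le; lra).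
  apply Rle_lt_trans with (s + r0 * s).
  apply Rplus_le_compat; auto. apply Rmult_le_compat_l; lra.
  apply Rle_lt_trans with ((r0 + 1) * (delta / (2 * (r0 + 1)))).
  nra. replace ((r0 + 1) * (delta / (2 * (r0 + 1)))) with (delta / 2) by (field; lra). lra. }
assert (Hb : Cmod (SI G (r0 - s) (r0 + s) (t0 - s) (t0 + s)) <=
  (2 * ((r0 + s) - (r0 - s)) + ((r0 - s) + (r0 + s)) * ((t0 + s) - (t0 - s))) * B).
{ apply SI_bound; try lra. apply EC_grid; lra.
  intros r Hr; split; apply HB; apply Hclose; lra.
  intros t Ht; split; apply HB; apply Hclose; lra. }
assert (HB0 : 0 <= B).
{ eapply Rle_trans. apply (Cmod_ge_0 (G (gam r0 t0))). apply HB. replace (gam r0 t0 - gam r0 t0)%C with (RtoC 0) by ring.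
  rewrite Cmod_0. lra. }
assert ((2 * ((r0 + s) - (r0 - s)) + ((r0 - s) + (r0 + s)) * ((t0 + s) - (t0 - s))) * B <= K * s).
{ unfold K. rewrite Rabs_pos_eq by lra. nra. }
assert (K * s <= X / 2).
{ apply Rle_trans with (K * (X / (2 * K))). apply Rmult_le_compat_l; lra. right. field. lra. }
rewrite <- EX in Hb. lra.
Qed.

End Excep.

Definition circ G rho := arc G rho (-PI) PI.

Lemma gam_mPI r : gam r (-PI) = gam r PI.
Proof. unfold gam. rewrite cos_neg, sin_neg, sin_PI. f_equal. ring. Qed.

Lemma ee_mPI : ee (-PI) = ee PI.
Proof. unfold ee. rewrite cos_neg, sin_neg, sin_PI. f_equal. ring. Qed.

Lemma SI_circ G a b : SI G a b (-PI) PI = 0%C -> circ G a = circ G b.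
Proof.
intros H. unfold SI in H. unfold circ.
assert (E : rad G (-PI) a b = rad G PI a b).
{ unfold rad, CI. apply (RInt_ext (V:=C_R_CompleteNormedModule)). intros x _. unfold radf. rewrite gam_mPI, ee_mPI. reflexivity. }
rewrite E in H.
assert (H' : (arc G b (- PI) PI - arc G a (- PI) PI)%C = 0%C).
{ rewrite <- H. ring. }
apply (f_equal (fun z => z + arc G a (- PI) PI)%C) in H'.
replace (arc G b (- PI) PI - arc G a (- PI) PI + arc G a (- PI) PI)%C with (arc G b (-PI) PI) in H' by ring.
rewrite H'. ring.
Qed.

Lemma PI_pos : 0 < PI.
Proof. apply PI_RGT_0. Qed.

Lemma annulus G a b : 0 < a -> a < b ->
  (forall w, a <= Cmod w <= b -> ex_derive (K:=C_AbsRing) (V:=C_NormedModule) G w) ->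
  circ G a = circ G b.
Proof.
intros Ha Hab H. apply SI_circ. apply goursat; try lra. pose proof PI_pos; lra.
intros r t Hr Ht. apply H. rewrite Cmod_gam; lra.
Qed.

Lemma gam_is_real r t k : 0 < r -> -PI <= t <= PI -> 0 < k -> gam r t = RtoC k -> r = k /\ t = 0.
Proof.
intros Hr Ht Hk E. unfold gam, RtoC in E. injection E as E1 E2.
assert (Hs : sin t = 0) by (apply (Rmult_eq_reg_l r); lra).
assert (Hc : 0 < cos t) by (apply (Rmult_lt_reg_l r); lra).
destruct (sin_eq_0_0 t Hs) as [z Hz].
pose proof PI_pos.
assert (Hz1 : (-1 <= z <= 1)%Z).
{ split; apply le_IZR; simpl.
  - apply (Rmult_le_reg_r PI); auto. lra.
  - apply (Rmult_le_reg_r PI); auto. lra. }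
assert (z = 0 \/ z = 1 \/ z = -1)%Z as [Z|[Z|Z]] by lia; subst z; simpl in Hz.
- rewrite Rmult_0_l in Hz. subst t. rewrite cos_0 in E1. split; lra.
- rewrite Rmult_1_l in Hz. subst t. rewrite cos_PI in Hc. lra.
- replace (-1 * PI) with (- PI) in Hz by ring. subst t. rewrite cos_neg, cos_PI in Hc. lra.
Qed.

Lemma annulus_excep G a b k : 0 < a -> a < k < b ->
  (forall w, a <= Cmod w <= b -> w <> RtoC k -> ex_derive (K:=C_AbsRing) (V:=C_NormedModule) G w) ->
  (exists B delta, 0 < delta /\ forall w, Cmod (w - RtoC k) < delta -> Cmod (G w) <= B) ->
  circ G a = circ G b.
Proof.
intros Ha Hk H [B [delta [Hd HB]]]. pose proof PI_pos. apply SI_circ.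
apply (excep G a b (-PI) PI k 0 Ha Hk) with B delta; auto; try lra.
- intros r t Hr Ht Hne. apply H. rewrite Cmod_gam; lra.
  intro E. apply gam_is_real in E; try lra.
- intros w Hw. apply HB. replace (gam k 0) with (RtoC k) in Hw. exact Hw.
  unfold gam, RtoC. rewrite cos_0, sin_0. f_equal; ring.
Qed.

Definition hol (f : C -> C) (z : C) := @ex_derive C_AbsRing C_NormedModule f z.

Lemma hol_const (c z : C) : hol (fun _ => c) z.
Proof. apply (ex_derive_const (K:=C_AbsRing) (V:=C_NormedModule)). Qed.

Lemma hol_id (z : C) : hol (fun w => w) z.
Proof.
exists (RtoC 1). apply CD_eps. intros eps Heps. exists 1. split. lra. intros w _.
replace (w - z - 1 * (w - z))%C with (RtoC 0) by ring. rewrite Cmod_0.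
pose proof (Cmod_ge_0 (w - z)). nra.
Qed.

Lemma hol_plus f g z : hol f z -> hol g z -> hol (fun w => f w + g w)%C z.
Proof. intros H1 H2. apply (ex_derive_plus (K:=C_AbsRing) (V:=C_NormedModule) f g z H1 H2). Qed.

Lemma hol_opp f z : hol f z -> hol (fun w => - f w)%C z.
Proof. intros H1. apply (ex_derive_opp (K:=C_AbsRing) (V:=C_NormedModule) f z H1). Qed.

Lemma hol_minus f g z : hol f z -> hol g z -> hol (fun w => f w - g w)%C z.
Proof. intros H1 H2. apply (ex_derive_minus (K:=C_AbsRing) (V:=C_NormedModule) f g z H1 H2). Qed.

Lemma CD_mult f g z l1 l2 : CD f z l1 -> CD g z l2 -> CD (fun w => f w * g w)%C z (l1 * g z + f z * l2)%C.
Proof.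
intros H1 H2. pose proof (CD_ccont _ _ _ H2) as Hc2.
rewrite CD_eps in H1, H2 |- *. intros eps Heps.
set (A := Cmod (g z) + 1). set (Bf := Cmod (f z) + 1). set (L := Cmod l1 + 1).
assert (HA : 0 < A) by (pose proof (Cmod_ge_0 (g z)); unfold A; lra).
assert (HBf : 0 < Bf) by (pose proof (Cmod_ge_0 (f z)); unfold Bf; lra).
assert (HL : 0 < L) by (pose proof (Cmod_ge_0 l1); unfold L; lra).
destruct (H1 (Rmin 1 (eps / (3 * A)))) as [d1 [Hd1 K1]]. apply Rmin_pos. lra. apply Rdiv_lt_0_compat; lra.
destruct (H2 (eps / (3 * Bf))) as [d2 [Hd2 K2]]. apply Rdiv_lt_0_compat; lra.
destruct (Hc2 (eps / (3 * L))) as [d3 [Hd3 K3]]. apply Rdiv_lt_0_compat; lra.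
exists (Rmin d1 (Rmin d2 d3)). split. repeat apply Rmin_pos; auto.
intros w Hw.
assert (Y1 : Cmod (w - z) < d1) by (eapply Rlt_le_trans; [exact Hw | apply Rmin_l]).
assert (Y2 : Cmod (w - z) < d2) by (eapply Rlt_le_trans; [exact Hw | eapply Rle_trans; [apply Rmin_r | apply Rmin_l]]).
assert (Y3 : Cmod (w - z) < d3) by (eapply Rlt_le_trans; [exact Hw | eapply Rle_trans; [apply Rmin_r | apply Rmin_r]]).
specialize (K1 w Y1). specialize (K2 w Y2). specialize (K3 w Y3).
pose proof (Rmin_l 1 (eps / (3 * A))). pose proof (Rmin_r 1 (eps / (3 * A))).
pose proof (Cmod_ge_0 (w - z)).
replace (f w * g w - f z * g z - (l1 * g z + f z * l2) * (w - z))%C with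
  ((f w - f z - l1 * (w - z)) * g z + f z * (g w - g z - l2 * (w - z)) + (f w - f z) * (g w - g z))%C by ring.
assert (Fb : Cmod (f w - f z) <= L * Cmod (w - z)).
{ replace (f w - f z)%C with ((f w - f z - l1 * (w - z)) + l1 * (w - z))%C by ring.
  eapply Rle_trans. apply Cmod_triangle. rewrite Cmod_mult. unfold L. nra. }
eapply Rle_trans. apply Cmod_triangle.
eapply Rle_trans. apply Rplus_le_compat_r. apply Cmod_triangle.
rewrite !Cmod_mult.
assert (T1 : Cmod (f w - f z - l1 * (w - z)) * Cmod (g z) <= eps / 3 * Cmod (w - z)).
{ apply Rle_trans with ((eps / (3 * A)) * Cmod (w - z) * A).
  apply Rmult_le_compat. apply Cmod_ge_0. apply Cmod_ge_0. nra. unfold A; lra.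
  right. field. lra. }
assert (T2 : Cmod (f z) * Cmod (g w - g z - l2 * (w - z)) <= eps / 3 * Cmod (w - z)).
{ apply Rle_trans with (Bf * ((eps / (3 * Bf)) * Cmod (w - z))).
  apply Rmult_le_compat. apply Cmod_ge_0. apply Cmod_ge_0. unfold Bf; lra. auto.
  right. field. lra. }
assert (T3 : Cmod (f w - f z) * Cmod (g w - g z) <= eps / 3 * Cmod (w - z)).
{ apply Rle_trans with (L * Cmod (w - z) * (eps / (3 * L))).
  apply Rmult_le_compat. apply Cmod_ge_0. apply Cmod_ge_0. auto. lra.
  right. field. lra. }
lra.
Qed.

Lemma hol_mult f g z : hol f z -> hol g z -> hol (fun w => f w * g w)%C z.
Proof.
intros [l1 H1] [l2 H2]. eexists. apply CD_mult; eauto.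
Qed.

Lemma CD_comp (F g : C -> C) t l v :
  CD F (g t) l -> CD g t v -> CD (fun s => F (g s)) t (l * v)%C.
Proof.
intros HF Hg. rewrite CD_eps in HF. rewrite CD_eps in Hg |- *.
intros eps Heps.
set (A := Cmod v + 1). assert (HA : 0 < A) by (pose proof (Cmod_ge_0 v); unfold A; lra).
set (L := Cmod l + 1). assert (HL : 0 < L) by (pose proof (Cmod_ge_0 l); unfold L; lra).
destruct (HF (eps / (2 * A))) as [d1 [Hd1 H1]]. apply Rdiv_lt_0_compat; lra.
destruct (Hg (Rmin 1 (eps / (2 * L)))) as [d2 [Hd2 H2]].
apply Rmin_pos. lra. apply Rdiv_lt_0_compat; lra.
exists (Rmin d2 (d1 / A)). split. apply Rmin_pos; auto. apply Rdiv_lt_0_compat; lra.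
intros s Hs.
assert (Hs2 : Cmod (s - t) < d2) by (eapply Rlt_le_trans; [exact Hs| apply Rmin_l]).
assert (Hs1 : Cmod (s - t) < d1 / A) by (eapply Rlt_le_trans; [exact Hs| apply Rmin_r]).
specialize (H2 s Hs2).
assert (Hgb : Cmod (g s - g t) <= A * Cmod (s - t)).
{ replace (g s - g t)%C with ((g s - g t - v * (s - t)) + v * (s - t))%C by ring.
  eapply Rle_trans. apply Cmod_triangle. rewrite Cmod_mult.
  pose proof (Rmin_l 1 (eps / (2 * L))). pose proof (Cmod_ge_0 (s - t)).
  unfold A. nra. }
assert (Hgd : Cmod (g s - g t) < d1).
{ eapply Rle_lt_trans. exact Hgb. apply (Rmult_lt_compat_l A) in Hs1; auto.
  replace (A * (d1 / A)) with d1 in Hs1 by (field; lra). lra. }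
specialize (H1 (g s) Hgd).
replace (F (g s) - F (g t) - l * v * (s - t))%C with
  ((F (g s) - F (g t) - l * (g s - g t)) + l * (g s - g t - v * (s - t)))%C by ring.
eapply Rle_trans. apply Cmod_triangle. rewrite Cmod_mult.
pose proof (Rmin_r 1 (eps / (2 * L))).
pose proof (Cmod_ge_0 (s - t)). pose proof (Cmod_ge_0 l).
assert (X1 : eps / (2 * A) * Cmod (g s - g t) <= eps / 2 * Cmod (s - t)).
{ apply Rle_trans with (eps / (2 * A) * (A * Cmod (s - t))).
  apply Rmult_le_compat_l. apply Rlt_le, Rdiv_lt_0_compat; lra. exact Hgb.
  right. field. lra. }
assert (X2 : Cmod l * Cmod (g s - g t - v * (s - t)) <= eps / 2 * Cmod (s - t)).
{ apply Rle_trans with (Cmod l * (eps / (2 * L) * Cmod (s - t))).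
  apply Rmult_le_compat_l. auto.
  eapply Rle_trans. exact H2. apply Rmult_le_compat_r; auto.
  apply Rle_trans with (L * (eps / (2 * L) * Cmod (s - t))).
  apply Rmult_le_compat_r. apply Rmult_le_pos. apply Rlt_le, Rdiv_lt_0_compat; lra. auto.
  unfold L; lra. right. field. lra. }
lra.
Qed.

Lemma hol_comp f g z : hol f (g z) -> hol g z -> hol (fun w => f (g w)) z.
Proof. intros [l1 H1] [l2 H2]. eexists. apply CD_comp; eauto. Qed.

Lemma hol_inv f z : hol f z -> f z <> 0%C -> hol (fun w => / f w)%C z.
Proof.
intros H1 H2. apply (hol_comp (fun w => / w)%C f z); auto.
eexists. apply CD_inv. auto.
Qed.

Lemma hol_div f g z : hol f z -> hol g z -> g z <> 0%C -> hol (fun w => f w / g w)%C z.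
Proof. intros. unfold Cdiv. apply hol_mult; auto. apply hol_inv; auto. Qed.

Lemma hol_ccont f z : hol f z -> ccont f z.
Proof. intros [l H]. apply (CD_ccont _ _ l H). Qed.

Lemma ex_circ G rho : 0 < rho -> (forall t, -PI <= t <= PI -> ccont G (gam rho t)) -> exCI (arcf G rho) (-PI) PI.
Proof. intros. apply ex_arc; auto. pose proof PI_pos; lra. Qed.

Lemma circ_bound G rho M : 0 < rho -> (forall t, -PI <= t <= PI -> ccont G (gam rho t) /\ Cmod (G (gam rho t)) <= M) ->
  Cmod (circ G rho) <= 2 * PI * (rho * M).
Proof.
intros Hr H. pose proof PI_pos. unfold circ, arc.
replace (2 * PI * (rho * M)) with ((PI - - PI) * (rho * M)) by ring.
apply CI_bound. lra. apply ex_circ; auto. intros; apply H; auto.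
intros x Hx. unfold arcf. rewrite Cmod_mult, Cmod_Ci_gam by lra. rewrite Rmult_comm.
apply Rmult_le_compat_l. lra. apply H. auto.
Qed.

Lemma circ_plus G1 G2 rho : 0 < rho -> (forall t, -PI <= t <= PI -> ccont G1 (gam rho t) /\ ccont G2 (gam rho t)) ->
  circ (fun w => G1 w + G2 w)%C rho = (circ G1 rho + circ G2 rho)%C.
Proof.
intros Hr H. unfold circ, arc. apply CI_unique.
apply isCI_ext with (fun x => arcf G1 rho x + arcf G2 rho x)%C.
intros. unfold arcf. ring.
apply isCI_plus; apply CI_correct; apply ex_circ; auto; intros; apply H; auto.
Qed.

Lemma circ_scal (c : C) G rho : 0 < rho -> (forall t, -PI <= t <= PI -> ccont G (gam rho t)) ->
  circ (fun w => c * G w)%C rho = (c * circ G rho)%C.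
Proof.
intros Hr H. unfold circ, arc. apply CI_unique.
apply isCI_ext with (fun x => c * arcf G rho x)%C.
intros. unfold arcf. ring.
apply isCI_mult_l; apply CI_correct; apply ex_circ; auto.
Qed.

Definition N0 (G : C -> C) := forall eta, 0 < eta -> exists delta, 0 < delta /\
  forall w, 0 < Cmod w < delta -> Cmod w * Cmod (G w) <= eta.

Lemma circ_small G s : 0 < s -> (forall w, 0 < Cmod w <= s -> ccont G w) -> N0 G ->
  forall eta, 0 < eta -> exists rho, 0 < rho < s /\ Cmod (circ G rho) <= 2 * PI * eta.
Proof.
intros Hs Hc HN eta Heta. destruct (HN eta Heta) as [d [Hd H]].
set (rho := Rmin (d / 2) (s / 2)).
assert (Hr : 0 < rho) by (unfold rho; apply Rmin_pos; lra).
assert (Hr1 : rho < d) by (unfold rho; eapply Rle_lt_trans; [apply Rmin_l| lra]).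
assert (Hr2 : rho < s) by (unfold rho; eapply Rle_lt_trans; [apply Rmin_r| lra]).
exists rho. split. lra.
replace (2 * PI * eta) with (2 * PI * (rho * (eta / rho))) by (field; lra).
apply circ_bound; auto. intros t Ht. split. apply Hc. rewrite Cmod_gam; lra.
specialize (H (gam rho t)). rewrite Cmod_gam in H by lra.
apply (Rmult_le_reg_l rho); auto. replace (rho * (eta / rho)) with eta by (field; lra). apply H. lra.
Qed.

Lemma zero_of_small (X : C) : (forall eta, 0 < eta -> Cmod X <= 2 * PI * eta) -> X = 0%C.
Proof.
intros H. pose proof PI_pos. apply Cmod_eq_0. apply Rle_antisym. 2: apply Cmod_ge_0.
apply Rnot_lt_le. intro Hp.
specialize (H (Cmod X / (4 * PI))). 
assert (0 < Cmod X / (4 * PI)) by (apply Rdiv_lt_0_compat; lra).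
specialize (H H1). replace (2 * PI * (Cmod X / (4 * PI))) with (Cmod X / 2) in H by (field; lra). lra.
Qed.

Lemma circ_zero_A G s : 0 < s -> (forall w, 0 < Cmod w <= s -> hol G w) -> N0 G -> circ G s = 0%C.
Proof.
intros Hs H HN. apply zero_of_small. intros eta Heta.
destruct (circ_small G s Hs (fun w Hw => hol_ccont _ _ (H w Hw)) HN eta Heta) as [rho [Hr Hb]].
rewrite <- (annulus G rho s); try lra. auto.
intros w Hw. apply H. lra.
Qed.

Lemma circ_zero_B G s k : 0 < k < s -> (forall w, 0 < Cmod w <= s -> w <> RtoC k -> hol G w) -> N0 G ->
  (exists B delta, 0 < delta /\ forall w, Cmod (w - RtoC k) < delta -> Cmod (G w) <= B) ->
  circ G s = 0%C.
Proof.
intros Hs H HN HB. apply zero_of_small. intros eta Heta.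
assert (Hc : forall w, 0 < Cmod w <= k / 2 -> ccont G w).
{ intros w Hw. apply hol_ccont. apply H. lra. intro E. subst. rewrite Cmod_R, Rabs_pos_eq in Hw; lra. }
destruct (circ_small G (k / 2) ltac:(lra) Hc HN eta Heta) as [rho [Hr Hb]].
rewrite <- (annulus_excep G rho s k); try lra. auto.
intros w Hw Hne. apply H; auto. lra. exact HB.
Qed.

Lemma circ_ext G1 G2 s : (forall t, -PI <= t <= PI -> G1 (gam s t) = G2 (gam s t)) -> circ G1 s = circ G2 s.
Proof.
intros H. pose proof PI_pos. unfold circ, arc, CI. apply (RInt_ext (V:=C_R_CompleteNormedModule)).
intros x Hx. rewrite Rmin_left, Rmax_right in Hx by lra. unfold arcf. rewrite H by lra. reflexivity.
Qed.

Lemma gam_neq0 s t : 0 < s -> gam s t <> 0%C.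
Proof. intros Hs E. apply (f_equal Cmod) in E. rewrite Cmod_gam, Cmod_0 in E; lra. Qed.

Lemma Cmod_sub_ge (w z : C) : Cmod w - Cmod z <= Cmod (w - z).
Proof. pose proof (Cmod_triangle (w - z) z). replace (w - z + z)%C with w in H by ring. lra. Qed.

Lemma circ_inv0 s : 0 < s -> circ (fun w => / w)%C s = (RtoC (2 * PI) * Ci)%C.
Proof.
intros Hs. pose proof PI_pos. unfold circ, arc. apply CI_unique.
apply isCI_ext with (fun _ => Ci).
{ intros x _. unfold arcf. field. apply gam_neq0; auto. }
pose proof (is_RInt_const (V:=C_R_NormedModule) (-PI) PI Ci) as H0.
unfold isCI. rewrite scal_CR in H0. replace (PI - - PI) with (2 * PI) in H0 by ring. exact H0.
Qed.

Lemma circ_winding k s : 0 < k < s -> circ (fun w => / (w - RtoC k))%C s = (RtoC (2 * PI) * Ci)%C.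
Proof.
intros Hk. pose proof PI_pos.
set (H2 := fun w => (RtoC k / (w * (w - RtoC k)))%C).
assert (Hne : forall w, k < Cmod w -> w <> 0%C /\ (w - RtoC k)%C <> 0%C).
{ intros w Hw. split; intro E.
  - subst. rewrite Cmod_0 in Hw. lra.
  - assert (w = RtoC k) by (replace w with ((w - RtoC k) + RtoC k)%C by ring; rewrite E; ring).
    subst. rewrite Cmod_R, Rabs_pos_eq in Hw; lra. }
assert (Hhol : forall w, k < Cmod w -> hol H2 w).
{ intros w Hw. destruct (Hne w Hw). unfold H2. apply hol_div. apply hol_const.
  apply hol_mult. apply hol_id. apply hol_minus. apply hol_id. apply hol_const.
  apply Cmult_neq_0; auto. }
assert (Hz : circ H2 s = 0%C).
{ apply zero_of_small. intros eta Heta.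
  set (R0 := s + k / eta).
  assert (HR0 : s < R0) by (unfold R0; assert (0 < k / eta) by (apply Rdiv_lt_0_compat; lra); lra).
  rewrite (annulus H2 s R0); try lra.
  2: { intros w Hw. apply Hhol. lra. }
  assert (HRk : 0 < R0 - k) by lra.
  apply Rle_trans with (2 * PI * (R0 * (k / (R0 * (R0 - k))))).
  2:{ apply Rmult_le_compat_l. lra. replace (R0 * (k / (R0 * (R0 - k)))) with (k / (R0 - k)) by (field; lra).
      apply (Rmult_le_reg_r (R0 - k)); auto. replace (k / (R0 - k) * (R0 - k)) with k by (field; lra).
      unfold R0. replace (eta * (s + k / eta - k)) with (eta * (s - k) + k) by (field; lra). nra. }
  apply circ_bound. lra. intros t Ht. split.
  apply hol_ccont, Hhol. rewrite Cmod_gam; lra.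
  unfold H2. destruct (Hne (gam R0 t)) as [N1 N2]. rewrite Cmod_gam; lra.
  rewrite Cmod_div by (apply Cmult_neq_0; auto). rewrite Cmod_mult, Cmod_R, Rabs_pos_eq by lra.
  rewrite Cmod_gam by lra.
  assert (R0 - k <= Cmod (gam R0 t - RtoC k)).
  { pose proof (Cmod_sub_ge (gam R0 t) (RtoC k)). rewrite Cmod_gam, Cmod_R, Rabs_pos_eq in H0; lra. }
  unfold Rdiv. apply Rmult_le_compat_l. lra.
  apply Rinv_le_contravar. apply Rmult_lt_0_compat; lra. apply Rmult_le_compat_l; lra. }
rewrite (circ_ext _ (fun w => / w + H2 w)%C).
- rewrite circ_plus.
  2: lra.
  2:{ intros t Ht. split.
      apply hol_ccont. apply (hol_inv (fun w => w)). apply hol_id. apply gam_neq0; lra.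
      apply hol_ccont, Hhol. rewrite Cmod_gam; lra. }
  rewrite Hz, circ_inv0 by lra. ring.
- intros t Ht. destruct (Hne (gam s t)) as [N1 N2]. rewrite Cmod_gam; lra.
  unfold H2. field. split; auto.
Qed.

Lemma Cmod2_C (c : C) : RtoC (Cmod c ^ 2) = (c * Cconj c)%C.
Proof. apply Cmod2_conj. Qed.

Lemma poisson_id (w : C) (s k : R) : (w * Cconj w)%C = RtoC (s * s) -> w <> 0%C ->
  (w - RtoC k)%C <> 0%C -> (Cconj w - RtoC k)%C <> 0%C ->
  (w * (/ (w - RtoC k) + RtoC k / (RtoC (s * s) - RtoC k * w)))%C =
  RtoC ((s * s - k * k) / Cmod (w - RtoC k) ^ 2).
Proof.
intros Hw Hw0 H1 H2.
assert (Hc : Cconj (w - RtoC k) = (Cconj w - RtoC k)%C).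
{ destruct w. unfold Cconj, RtoC, Cminus, Cplus, Copp; simpl. f_equal; ring. }
assert (Hm : Cmod (w - RtoC k) ^ 2 <> 0).
{ apply pow_nonzero. intro E. apply H1. apply Cmod_eq_0. auto. }
rewrite (RtoC_div _ _ Hm), Cmod2_C, Hc.
rewrite (RtoC_minus (s * s) (k * k)), (RtoC_mult k k).
rewrite <- Hw.
field. repeat split; auto.
replace (w * Cconj w - RtoC k * w)%C with (w * (Cconj w - RtoC k))%C by ring.
apply Cmult_neq_0; auto.
Qed.

Lemma Cmod_k_minus (w : C) (k : R) : 0 < k -> Cmod w < k -> k - Cmod w <= Cmod (w - RtoC k).
Proof.
intros Hk Hw. pose proof (Cmod_sub_ge (RtoC k) w). rewrite Cmod_R, Rabs_pos_eq in H by lra.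
replace (RtoC k - w)%C with (- (w - RtoC k))%C in H by ring. rewrite Cmod_opp in H. lra.
Qed.

Lemma neq_k (w : C) (k : R) : w <> RtoC k -> (w - RtoC k)%C <> 0%C.
Proof. intros H E. apply H. replace w with ((w - RtoC k) + RtoC k)%C by ring. rewrite E. ring. Qed.

Section Poisson.
Variable F : C -> C.
Variables k s : R.
Hypothesis Hks : 0 < k < s.
Hypothesis HF : forall w, 0 < Cmod w <= s -> hol F w.
Hypothesis HN : N0 F.

Definition G1 w := ((F w - F (RtoC k)) / (w - RtoC k))%C.
Definition G2 w := (F w * (RtoC k / (RtoC (s * s) - RtoC k * w)))%C.
Definition Pk t := (s * s - k * k) / Cmod (gam s t - RtoC k) ^ 2.

Lemma hol_G1 w : 0 < Cmod w <= s -> w <> RtoC k -> hol G1 w.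
Proof.
intros Hw Hne. unfold G1. apply hol_div. apply hol_minus. apply HF; auto. apply hol_const.
apply hol_minus. apply hol_id. apply hol_const. apply neq_k; auto.
Qed.

Lemma den2 w : Cmod w <= s -> (RtoC (s * s) - RtoC k * w)%C <> 0%C.
Proof.
intros Hw E. apply (f_equal Cmod) in E. rewrite Cmod_0 in E.
pose proof (Cmod_sub_ge (RtoC (s * s)) (RtoC k * w)).
rewrite Cmod_R, Rabs_pos_eq in H by nra. rewrite Cmod_mult, Cmod_R, Rabs_pos_eq in H by lra.
pose proof (Cmod_ge_0 w). nra.
Qed.

Lemma den2_ge w : Cmod w <= s -> s * s - k * s <= Cmod (RtoC (s * s) - RtoC k * w).
Proof.
intros Hw. pose proof (Cmod_sub_ge (RtoC (s * s)) (RtoC k * w)).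
rewrite Cmod_R, Rabs_pos_eq in H by nra. rewrite Cmod_mult, Cmod_R, Rabs_pos_eq in H by lra.
pose proof (Cmod_ge_0 w). nra.
Qed.

Lemma hol_G2 w : 0 < Cmod w <= s -> hol G2 w.
Proof.
intros Hw. unfold G2. apply hol_mult. apply HF; auto. apply hol_div. apply hol_const.
apply hol_minus. apply hol_const. apply hol_mult. apply hol_const. apply hol_id.
apply den2. lra.
Qed.

Lemma circ_G1 : circ G1 s = 0%C.
Proof.
apply (circ_zero_B G1 s k); auto.
- intros w Hw Hne. apply hol_G1; auto.
- intros eta Heta.
  set (A := Cmod (F (RtoC k)) + 1). assert (HA : 0 < A) by (pose proof (Cmod_ge_0 (F (RtoC k))); unfold A; lra).
  destruct (HN (eta * k / 4)) as [d1 [Hd1 H1]]. apply Rdiv_lt_0_compat; nra.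
  exists (Rmin d1 (Rmin (k / 2) (eta * k / (4 * A)))). split.
  repeat apply Rmin_pos; try lra. apply Rdiv_lt_0_compat; nra.
  intros w Hw.
  assert (W1 : Cmod w < d1) by (eapply Rlt_le_trans; [apply Hw | apply Rmin_l]).
  assert (W2 : Cmod w < k / 2) by (eapply Rlt_le_trans; [apply Hw | eapply Rle_trans; [apply Rmin_r | apply Rmin_l]]).
  assert (W3 : Cmod w < eta * k / (4 * A)) by (eapply Rlt_le_trans; [apply Hw | eapply Rle_trans; [apply Rmin_r | apply Rmin_r]]).
  specialize (H1 w (conj (proj1 Hw) W1)).
  assert (Hd : k / 2 <= Cmod (w - RtoC k)) by (pose proof (Cmod_k_minus w k); lra).
  unfold G1. rewrite Cmod_div. 2:{ intro E. rewrite E, Cmod_0 in Hd. lra. }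
  assert (Num : Cmod (F w - F (RtoC k)) <= Cmod (F w) + Cmod (F (RtoC k))).
  { unfold Cminus. eapply Rle_trans. apply Cmod_triangle. rewrite Cmod_opp. lra. }
  pose proof (Cmod_ge_0 w). pose proof (Cmod_ge_0 (F w - F (RtoC k))).
  apply Rle_trans with (Cmod w * (Cmod (F w - F (RtoC k)) / (k / 2))).
  apply Rmult_le_compat_l; auto. unfold Rdiv. apply Rmult_le_compat_l; auto.
  apply Rinv_le_contravar; lra.
  apply Rle_trans with ((Cmod w * Cmod (F w) + Cmod w * A) * (2 / k)).
  { replace (Cmod w * (Cmod (F w - F (RtoC k)) / (k / 2))) with (Cmod w * Cmod (F w - F (RtoC k)) * (2 / k)) by (field; lra).
    apply Rmult_le_compat_r. apply Rlt_le, Rdiv_lt_0_compat; lra. unfold A. nra. }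
  assert (Cmod w * A <= eta * k / 4).
  { apply Rle_trans with (eta * k / (4 * A) * A). apply Rmult_le_compat_r; lra. right. field. lra. }
  apply Rle_trans with ((eta * k / 4 + eta * k / 4) * (2 / k)).
  apply Rmult_le_compat_r. apply Rlt_le, Rdiv_lt_0_compat; lra. lra.
  right. field. lra.
- assert (Hk : hol F (RtoC k)) by (apply HF; rewrite Cmod_R, Rabs_pos_eq; lra).
  destruct Hk as [l Hl]. rewrite CD_eps in Hl. destruct (Hl 1 Rlt_0_1) as [d [Hd H]].
  exists (Cmod l + 1), d. split; auto. intros w Hw.
  destruct (Ceq_dec w (RtoC k)) as [E|E].
  + subst. unfold G1. replace (F (RtoC k) - F (RtoC k))%C with (RtoC 0) by ring.
    unfold Cdiv. rewrite Cmult_0_l, Cmod_0. pose proof (Cmod_ge_0 l). lra.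
  + unfold G1. assert (Hne := neq_k _ _ E). rewrite Cmod_div by auto.
    assert (Hp : 0 < Cmod (w - RtoC k)) by (apply Cmod_gt_0; auto).
    apply (Rmult_le_reg_r (Cmod (w - RtoC k))); auto.
    replace (Cmod (F w - F (RtoC k)) / Cmod (w - RtoC k) * Cmod (w - RtoC k)) with (Cmod (F w - F (RtoC k))) by (field; lra).
    specialize (H w Hw).
    replace (F w - F (RtoC k))%C with ((F w - F (RtoC k) - l * (w - RtoC k)) + l * (w - RtoC k))%C by ring.
    eapply Rle_trans. apply Cmod_triangle. rewrite Cmod_mult. lra.
Qed.

Lemma circ_G2 : circ G2 s = 0%C.
Proof.
apply (circ_zero_A G2 s). lra.
- intros w Hw. apply hol_G2; auto.
- intros eta Heta.
  assert (Hq : 0 < s * s - k * s) by nra.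
  destruct (HN (eta * (s * s - k * s) / k)) as [d1 [Hd1 H1]]. apply Rdiv_lt_0_compat; nra.
  exists (Rmin d1 s). split. apply Rmin_pos; lra.
  intros w Hw.
  assert (W1 : Cmod w < d1) by (eapply Rlt_le_trans; [apply Hw | apply Rmin_l]).
  assert (W2 : Cmod w < s) by (eapply Rlt_le_trans; [apply Hw | apply Rmin_r]).
  specialize (H1 w (conj (proj1 Hw) W1)).
  unfold G2. rewrite Cmod_mult, Cmod_div by (apply den2; lra). rewrite Cmod_R, Rabs_pos_eq by lra.
  pose proof (den2_ge w ltac:(lra)).
  pose proof (Cmod_ge_0 w). pose proof (Cmod_ge_0 (F w)).
  apply Rle_trans with (Cmod w * Cmod (F w) * (k / (s * s - k * s))).
  { rewrite <- Rmult_assoc. apply Rmult_le_compat_l. nra.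
    unfold Rdiv. apply Rmult_le_compat_l. lra. apply Rinv_le_contravar; lra. }
  apply Rle_trans with (eta * (s * s - k * s) / k * (k / (s * s - k * s))).
  apply Rmult_le_compat_r. apply Rlt_le, Rdiv_lt_0_compat; lra. auto.
  right. field. lra.
Qed.
End Poisson.

Section Poisson2.
Variable F : C -> C.
Variables k s : R.
Hypothesis Hks : 0 < k < s.
Hypothesis HF : forall w, 0 < Cmod w <= s -> hol F w.
Hypothesis HN : N0 F.

Lemma gam_s_ne_k t : gam s t <> RtoC k.
Proof. intro E. apply (f_equal Cmod) in E. rewrite Cmod_gam, Cmod_R, Rabs_pos_eq in E; lra. Qed.

Lemma Fcont_circ t : ccont F (gam s t).
Proof. apply hol_ccont, HF. rewrite Cmod_gam; lra. Qed.

Lemma circ_main : circ (fun w => F w / (w - RtoC k))%C s = (RtoC (2 * PI) * Ci * F (RtoC k))%C.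
Proof.
rewrite (circ_ext _ (fun w => G1 F k w + F (RtoC k) * / (w - RtoC k))%C).
2:{ intros t Ht. unfold G1. field. apply neq_k, gam_s_ne_k. }
rewrite circ_plus. 2: lra.
2:{ intros t Ht. split. apply hol_ccont. apply (hol_G1 F k s); auto. rewrite Cmod_gam; lra. apply gam_s_ne_k.
    apply hol_ccont. apply hol_mult. apply hol_const. apply (hol_inv (fun w => w - RtoC k)%C).
    apply hol_minus. apply hol_id. apply hol_const. apply neq_k, gam_s_ne_k. }
rewrite (circ_G1 F k s) by auto.
rewrite circ_scal. 2: lra.
2:{ intros t Ht. apply hol_ccont. apply (hol_inv (fun w => w - RtoC k)%C).
    apply hol_minus. apply hol_id. apply hol_const. apply neq_k, gam_s_ne_k. }
rewrite circ_winding by lra. ring.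
Qed.

Definition Gs w := (F w / (w - RtoC k) + G2 F k s w)%C.

Lemma circ_Gs : circ Gs s = (RtoC (2 * PI) * Ci * F (RtoC k))%C.
Proof.
unfold Gs. rewrite circ_plus. 2: lra.
2:{ intros t Ht. split. apply hol_ccont. apply hol_div. apply HF. rewrite Cmod_gam; lra.
    apply hol_minus. apply hol_id. apply hol_const. apply neq_k, gam_s_ne_k.
    apply hol_ccont. apply (hol_G2 F k s); auto. rewrite Cmod_gam; lra. }
rewrite circ_main, circ_G2 by auto. ring.
Qed.

Lemma gam_conj t : (gam s t * Cconj (gam s t))%C = RtoC (s * s).
Proof.
unfold gam, Cconj, Cmult, RtoC; simpl. pose proof (sin2_cos2 t). unfold Rsqr in H. f_equal; nra.
Qed.

Lemma arcf_Gs t : arcf Gs s t = (Ci * (F (gam s t) * RtoC (Pk k s t)))%C.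
Proof.
unfold arcf, Gs, G2, Pk. set (w := gam s t).
assert (Hw : (w * Cconj w)%C = RtoC (s * s)) by apply gam_conj.
assert (Hw0 : w <> 0%C) by (apply gam_neq0; lra).
assert (H1 : (w - RtoC k)%C <> 0%C) by (apply neq_k, gam_s_ne_k).
assert (H2 : (Cconj w - RtoC k)%C <> 0%C).
{ apply neq_k. intro E. apply (f_equal Cmod) in E. rewrite Cmod_conj in E. unfold w in E.
  rewrite Cmod_gam, Cmod_R, Rabs_pos_eq in E; lra. }
rewrite <- (poisson_id w s k Hw Hw0 H1 H2).
field. split; auto. apply den2; auto. unfold w. rewrite Cmod_gam; lra.
Qed.

Lemma poisson : isCI (fun t => F (gam s t) * RtoC (Pk k s t))%C (-PI) PI (RtoC (2 * PI) * F (RtoC k))%C.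
Proof.
apply isCI_ext with (fun t => - Ci * arcf Gs s t)%C.
{ intros x _. rewrite arcf_Gs. replace (- Ci * (Ci * (F (gam s x) * RtoC (Pk k s x))))%C with
    (- (Ci * Ci) * (F (gam s x) * RtoC (Pk k s x)))%C by ring.
  replace (Ci * Ci)%C with (RtoC (-1)). ring. unfold Ci, Cmult, RtoC; simpl. f_equal; ring. }
replace (RtoC (2 * PI) * F (RtoC k))%C with (- Ci * circ Gs s)%C.
2:{ rewrite circ_Gs. replace (Ci * Ci)%C with (RtoC (-1)). 2:{ unfold Ci, Cmult, RtoC; simpl. f_equal; ring. }
    replace (- Ci * (RtoC (2 * PI) * Ci * F (RtoC k)))%C with (- (Ci * Ci) * (RtoC (2 * PI) * F (RtoC k)))%C by ring.
    replace (Ci * Ci)%C with (RtoC (-1)). ring. unfold Ci, Cmult, RtoC; simpl. f_equal; ring. }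
apply isCI_mult_l. apply CI_correct. apply ex_circ. lra.
intros t Ht. apply hol_ccont. unfold Gs. apply hol_plus. apply hol_div. apply HF. rewrite Cmod_gam; lra.
apply hol_minus. apply hol_id. apply hol_const. apply neq_k, gam_s_ne_k.
apply (hol_G2 F k s); auto. rewrite Cmod_gam; lra.
Qed.

End Poisson2.

Lemma Pk_nonneg k s t : 0 < k < s -> 0 <= Pk k s t.
Proof.
intros H. unfold Pk. apply Rmult_le_pos. nra. apply Rlt_le, Rinv_0_lt_compat.
apply pow_lt. apply Cmod_gt_0. apply neq_k. intro E. apply (f_equal Cmod) in E.
rewrite Cmod_gam, Cmod_R, Rabs_pos_eq in E; lra.
Qed.

Lemma N0_const (c : C) : N0 (fun _ => c).
Proof.
intros eta Heta. exists (eta / (Cmod c + 1)). split.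
apply Rdiv_lt_0_compat. lra. pose proof (Cmod_ge_0 c); lra.
intros w Hw. pose proof (Cmod_ge_0 c).
apply Rle_trans with (eta / (Cmod c + 1) * (Cmod c + 1)).
apply Rmult_le_compat; lra. right. field. lra.
Qed.

Lemma Pk_int k s : 0 < k < s -> is_RInt (Pk k s) (-PI) PI (2 * PI).
Proof.
intros Hks.
pose proof (poisson (fun _ => RtoC 1) k s Hks (fun w _ => hol_const _ w) (N0_const _)) as H.
apply (is_RInt_fct_extend_fst (U:=R_NormedModule) (V:=R_NormedModule)) in H.
simpl in H. replace (2 * PI * 1 - 0 * 0) with (2 * PI) in H by ring.
eapply is_RInt_ext. 2: exact H.
intros x _. simpl. ring.
Qed.

Lemma maxp F k s M : 0 < k < s -> (forall w, 0 < Cmod w <= s -> hol F w) -> N0 F ->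
  (forall t, -PI <= t <= PI -> Cmod (F (gam s t)) <= M) -> Cmod (F (RtoC k)) <= M.
Proof.
intros Hks HF HN HM. pose proof PI_pos.
pose proof (poisson F k s Hks HF HN) as HP.
assert (Hc : Cmod (CI (fun t => F (gam s t) * RtoC (Pk k s t))%C (-PI) PI) <= M * (2 * PI)).
{ apply CI_bound_fun with (g := fun t => M * Pk k s t). lra.
  exists (RtoC (2 * PI) * F (RtoC k))%C. exact HP.
  apply (is_RInt_scal (V:=R_NormedModule) (Pk k s) (-PI) PI M). apply Pk_int; auto.
  intros x Hx. rewrite Cmod_mult, Cmod_R, Rabs_pos_eq by (apply Pk_nonneg; auto).
  apply Rmult_le_compat_r. apply Pk_nonneg; auto. apply HM; auto. }
rewrite (CI_unique _ _ _ _ HP) in Hc. rewrite Cmod_mult, Cmod_R, Rabs_pos_eq in Hc by lra.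
apply (Rmult_le_reg_l (2 * PI)). lra. lra.
Qed.

Lemma limit_s (X c k : R) : 0 <= c -> 0 <= k < 1 -> (forall s, k < s < 1 -> X <= c / (s * s)) -> X <= c.
Proof.
intros Hc Hk H. apply Rnot_lt_le. intro Hlt.
assert (HX : 0 < X) by lra.
set (a := Rmax k (c / X)).
assert (Ha1 : a < 1). { unfold a. apply Rmax_lub_lt. lra. apply (Rmult_lt_reg_r X); auto. unfold Rdiv. rewrite Rmult_assoc, Rinv_l by lra. lra. }
assert (Ha0 : 0 <= a) by (unfold a; eapply Rle_trans; [|apply Rmax_l]; lra).
set (s := (1 + a) / 2).
assert (Hs : k < s < 1) by (unfold s; pose proof (Rmax_l k (c / X)); fold a in H0; lra).
specialize (H s Hs).
assert (Hss : a < s * s) by (unfold s; nra).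
assert (Hcx : c / X <= a) by (unfold a; apply Rmax_r).
assert (0 < s * s) by nra.
assert (c < X * (s * s)).
{ apply Rle_lt_trans with (X * a). apply (Rmult_le_reg_r (/ X)). apply Rinv_0_lt_compat; auto.
  replace (X * a * / X) with a by (field; lra). exact Hcx. apply Rmult_lt_compat_l; auto. }
assert (X <= c / (s * s)) by exact H.
apply (Rmult_le_compat_r (s * s)) in H2; [|lra].
replace (c / (s * s) * (s * s)) with c in H2 by (field; lra). lra.
Qed.

Section Main.
Variable h : C -> C.
Variable eps : R.
Hypothesis Hhol : holomorphic_on_disk h.
Hypothesis Hmap : maps_disk_to_disk h.
Hypothesis H0 : h (RtoC 0) = RtoC eps.
Hypothesis Heps : 0 <= eps.
Variable b1 : C.
Hypothesis Hb1 : CD h (RtoC 0) b1.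

Definition M0 := 1 + eps + Cmod b1.
Definition fh (z : C) := (h z - RtoC eps - b1 * z)%C.

Lemma fh_bound z : Cmod z < 1 -> Cmod (fh z) <= M0 * (Cmod z * Cmod z).
Proof.
intros Hz.
destruct (Ceq_dec z 0) as [E|E].
{ subst. unfold fh. rewrite H0. replace (RtoC eps - RtoC eps - b1 * 0)%C with (RtoC 0) by ring.
  rewrite Cmod_0. unfold M0. pose proof (Cmod_ge_0 b1). nra. }
set (kk := Cmod z).
assert (Hkk : 0 < kk) by (apply Cmod_gt_0; auto).
set (u := (z / RtoC kk)%C).
assert (Hkk0 : RtoC kk <> 0%C) by (intro X; injection X; lra).
assert (Hu : Cmod u = 1) by (unfold u; rewrite Cmod_div, Cmod_R, Rabs_pos_eq by (auto; lra); fold kk; field; lra).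
assert (Huz : (u * RtoC kk)%C = z) by (unfold u; field; auto).
set (F := fun w => (fh (u * w) / (w * w))%C).
assert (HF : forall w, 0 < Cmod w < 1 -> hol F w).
{ intros w Hw. unfold F, fh. apply hol_div.
  - apply hol_minus. apply hol_minus.
    + apply (hol_comp h (fun w => u * w)%C). apply Hhol. rewrite Cmod_mult, Hu. lra.
      apply hol_mult. apply hol_const. apply hol_id.
    + apply hol_const.
    + apply hol_mult. apply hol_const. apply hol_mult. apply hol_const. apply hol_id.
  - apply hol_mult; apply hol_id.
  - apply Cmult_neq_0; intro X; rewrite X, Cmod_0 in Hw; lra. }
assert (HN : N0 F).
{ intros eta Heta. rewrite CD_eps in Hb1. destruct (Hb1 eta Heta) as [d [Hd Hd']].
  exists d. split; auto. intros w Hw.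
  assert (Hw0 : w <> 0%C) by (intro X; rewrite X, Cmod_0 in Hw; lra).
  specialize (Hd' (u * w)%C).
  replace (u * w - RtoC 0)%C with (u * w)%C in Hd' by ring.
  rewrite Cmod_mult, Hu, Rmult_1_l in Hd'. specialize (Hd' (proj2 Hw)).
  unfold F. rewrite Cmod_div by (apply Cmult_neq_0; auto). rewrite Cmod_mult.
  unfold fh. rewrite H0 in Hd'.
  apply (Rmult_le_reg_r (Cmod w)). lra.
  replace (Cmod w * (Cmod (h (u * w) - RtoC eps - b1 * (u * w)) / (Cmod w * Cmod w)) * Cmod w)
    with (Cmod (h (u * w) - RtoC eps - b1 * (u * w))) by (field; lra).
  exact Hd'. }
assert (HFk : forall s, kk < s < 1 -> Cmod (F (RtoC kk)) <= M0 / (s * s)).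
{ intros s Hs. apply (maxp F kk s). lra.
  intros w Hw. apply HF. lra. exact HN.
  intros t Ht. unfold F. set (w := gam s t).
  assert (Hw : Cmod w = s) by (unfold w; rewrite Cmod_gam; lra).
  assert (Hw0 : w <> 0%C) by (intro X; rewrite X, Cmod_0 in Hw; lra).
  rewrite Cmod_div by (apply Cmult_neq_0; auto). rewrite Cmod_mult, Hw.
  unfold Rdiv. apply Rmult_le_compat_r. apply Rlt_le, Rinv_0_lt_compat. nra.
  unfold fh. unfold Cminus. eapply Rle_trans. apply Cmod_triangle. rewrite Cmod_opp.
  eapply Rle_trans. apply Rplus_le_compat_r. apply Cmod_triangle. rewrite Cmod_opp, Cmod_R, Rabs_pos_eq by lra.
  rewrite !Cmod_mult, Hu, Hw.
  assert (Cmod (h (u * w)) < 1) by (apply Hmap; rewrite Cmod_mult, Hu, Hw; lra).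
  pose proof (Cmod_ge_0 b1). unfold M0. nra. }
assert (HFk' : Cmod (F (RtoC kk)) <= M0).
{ apply (limit_s _ _ kk). unfold M0; pose proof (Cmod_ge_0 b1); lra. split; [lra | unfold kk; lra]. exact HFk. }
unfold F in HFk'. rewrite Huz in HFk'.
rewrite Cmod_div in HFk' by (apply Cmult_neq_0; auto). rewrite Cmod_mult, Cmod_R, Rabs_pos_eq in HFk' by lra.
fold kk. apply (Rmult_le_reg_r (/ (kk * kk))). apply Rinv_0_lt_compat; nra.
replace (M0 * (kk * kk) * / (kk * kk)) with M0 by (field; lra). exact HFk'.
Qed.

End Main.

Theorem lemma3p1 (k : R) (hk0 : 0 <= k) (hk1 : k < 1) :
  forall eta : R, 0 < eta ->
  exists eps0 : R, 0 < eps0 /\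
    forall (eps : R) (h : C -> C),
      0 <= eps -> eps < eps0 ->
      holomorphic_on_disk h ->
      maps_disk_to_disk h ->
      h (RtoC 0) = RtoC eps ->
      (forall r : R, 0 < r < 1 ->
         forall z : C, Cmod z < r ->
           closed_ball (RtoC ((1 - r ^ 2) / 2)) ((1 + r ^ 2) / 2) (h z)) ->
      Cmod (h (RtoC k)) <= k ^ 2 + eta.
Proof.
intros eta Heta.
set (sg := Rmin (1/4) (eta / 48)).
assert (Hsg0 : 0 < sg) by (unfold sg; apply Rmin_pos; lra).
assert (Hsg1 : sg <= 1/4) by (unfold sg; apply Rmin_l).
assert (Hsg2 : sg <= eta / 48) by (unfold sg; apply Rmin_r).
exists (Rmin 1 (sg * eta / 12)). split.
{ apply Rmin_pos. lra. apply Rdiv_lt_0_compat. nra. lra. }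
intros eps h He0 He1 Hhol Hmap H0 Hball.
assert (He2 : eps < 1) by (eapply Rlt_le_trans; [exact He1 | apply Rmin_l]).
assert (He3 : eps < sg * eta / 12) by (eapply Rlt_le_trans; [exact He1 | apply Rmin_r]).
destruct (Hhol (RtoC 0)) as [b1 Hb1]. { rewrite Cmod_0. lra. }
assert (HCD : CD h (RtoC 0) b1) by exact Hb1.
assert (Hf := fh_bound h eps Hhol Hmap H0 He0 b1 HCD).
unfold M0, fh in Hf.
set (B := Cmod b1).
assert (HB0 : 0 <= B) by apply Cmod_ge_0.
assert (Hre : forall z, Cmod z = sg -> - (4 * (sg * sg)) <= fst (h z)).
{ intros z Hz. assert (Hr : 0 < 2 * sg < 1) by lra.
  specialize (Hball (2 * sg) Hr z ltac:(lra)). unfold closed_ball in Hball.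
  pose proof (re_le_Cmod (h z - RtoC ((1 - (2 * sg) ^ 2) / 2))%C).
  assert (Rabs (Re (h z - RtoC ((1 - (2 * sg) ^ 2) / 2))) <= (1 + (2 * sg) ^ 2) / 2) by lra.
  apply Rabs_le_between in H1. unfold Re in H1. simpl in H1. simpl. nra. }
assert (HBb : B * (sg - sg * sg) <= eps + 5 * (sg * sg) + eps * (sg * sg)).
{ destruct (Ceq_dec b1 0) as [E|E].
  - unfold B. rewrite E, Cmod_0. nra.
  - assert (HBp : 0 < B) by (apply Cmod_gt_0; auto).
    set (z := (- RtoC sg * (Cconj b1 / RtoC B))%C).
    assert (HB' : RtoC B <> 0%C) by (intro X; injection X; lra).
    assert (Hz : Cmod z = sg).
    { unfold z. rewrite Cmod_mult, Cmod_opp, Cmod_R, Cmod_div, Cmod_conj, Cmod_R by auto.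
      fold B. rewrite !Rabs_pos_eq by lra. field. lra. }
    assert (Hbz : (b1 * z)%C = RtoC (- (sg * B))).
    { unfold z. replace (b1 * (- RtoC sg * (Cconj b1 / RtoC B)))%C with (- RtoC sg * (b1 * Cconj b1) / RtoC B)%C by (field; auto).
      rewrite <- Cmod2_conj. fold B. replace (B ^ 2) with (B * B) by ring. rewrite RtoC_opp, !RtoC_mult. field. auto. }
    assert (Hzf := Hf z ltac:(lra)). rewrite Hz in Hzf.
    assert (Hrz := Hre z Hz).
    assert (Ehz : h z = (RtoC eps + RtoC (- (sg * B)) + (h z - RtoC eps - b1 * z))%C) by (rewrite <- Hbz; ring).
    set (X := (h z - RtoC eps - b1 * z)%C) in *.
    rewrite Ehz in Hrz.
    assert (EE : fst (RtoC eps + RtoC (- (sg * B)) + X)%C = eps - sg * B + fst X) by (unfold RtoC; simpl; ring).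
    rewrite EE in Hrz.
    pose proof (re_le_Cmod X). apply Rabs_le_between in H.
    unfold Re in H. fold B in Hzf. nra. }
assert (HB1 : B <= 2 * eps / sg + 12 * sg).
{ apply (Rmult_le_reg_r (sg / 2)). lra.
  replace ((2 * eps / sg + 12 * sg) * (sg / 2)) with (eps + 6 * (sg * sg)) by (field; lra).
  apply Rle_trans with (B * (sg - sg * sg)). apply Rmult_le_compat_l; nra.
  nra. }
assert (Hk := Hf (RtoC k) ltac:(rewrite Cmod_R, Rabs_pos_eq; lra)).
rewrite Cmod_R, Rabs_pos_eq in Hk by lra. fold B in Hk.
replace (h (RtoC k)) with (RtoC eps + b1 * RtoC k + (h (RtoC k) - RtoC eps - b1 * RtoC k))%C by ring.
eapply Rle_trans. apply Cmod_triangle.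
eapply Rle_trans. apply Rplus_le_compat_r. apply Cmod_triangle.
rewrite Cmod_mult, !Cmod_R, (Rabs_pos_eq eps), (Rabs_pos_eq k) by lra. fold B.
assert (Hkk : k * k <= 1) by nra.
assert (Hk2 : k ^ 2 = k * k) by ring.
assert (X1 : eps + B * k + (1 + eps + B) * (k * k) <= k * k + 2 * eps + 2 * B).
{ nra. }
assert (X2 : 2 * eps + 2 * B <= eta).
{ assert (4 * eps / sg <= eta / 3).
  { apply (Rmult_le_reg_r sg). lra. replace (4 * eps / sg * sg) with (4 * eps) by (field; lra). nra. }
  assert (2 * eps / sg = (4 * eps / sg) / 2) by (field; lra).
  nra. }
nra.
Qed.
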